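(* Let $T>0$ and let $g$ be continuous and nonnegative on $[0,T]$ with $g(0)=0$. Assume that for each boundary function $s$ on $[0,T]$ the Fixed Boundary Dirichlet Problem on $s$ with data $g$ has a solution $U^s$, and define $$\mathcal{R}(s)(t)=-\int_0^t U^s_x(s(z),z)\,dz=-\int_0^t U^s_x(0,z)\,dz-\int_0^{s(t)}U^s(x,t)\,dx,\qquad 0\le t\le T.$$ If $s_1,s_2$ are boundary functions with $s_1(t)\le s_2(t)$ for all $t\in[0,T]$, then $\mathcal{R}(s_1)(t)\ge\mathcal{R}(s_2)(t)$ for all $t\in[0,T]$.
   Context: A boundary function on $[0,T]$ is a function $s\in C([0,T])\cap C^1((0,T])$ with $s(0)=0$ and $s(t)>0$ for $t\in(0,T]$. For such $s$ let $Q_{s,T}=\{(x,t):0<x<s(t),\,0<t<T\}$. The Fixed Boundary Dirichlet Problem on $s$ with data $g$ asks for $U\in C(\overline{Q_{s,T}})\cap C^{2,1}(Q_{s,T})$ with $U_x$ continuous on $\overline{Q_{s,T}}\setminus\{t=0\}$ such that $U_t=U_{xx}$ in $Q_{s,T}$, $U(0,0)=0$, $U(s(t),t)=0$ for $t\in[0,T]$, and $U(0,t)=g(t)$ for $t\in[0,T]$. Its solution is denoted $U^s$. The two expressions for $\mathcal{R}(s)(t)$ agree for such solutions (by integrating $U_t=U_{xx}$ over $Q_{s,t}$). *)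

(* Defs.v *)
From Stdlib Require Import Reals.
From Coquelicot Require Import Coquelicot.
Open Scope R_scope.

Definition cont_within (A : R -> Prop) (f : R -> R) (t : R) : Prop :=
  forall eps, 0 < eps -> exists d, 0 < d /\
    forall u, A u -> Rabs (u - t) < d -> Rabs (f u - f t) < eps.

Definition cont_on (A : R -> Prop) (f : R -> R) : Prop :=
  forall t, A t -> cont_within A f t.

Definition deriv_within (A : R -> Prop) (f : R -> R) (t l : R) : Prop :=
  forall eps, 0 < eps -> exists d, 0 < d /\
    forall u, A u -> Rabs (u - t) < d ->
      Rabs (f u - f t - l * (u - t)) <= eps * Rabs (u - t).

Definition cont2_on (A : R -> R -> Prop) (f : R -> R -> R) : Prop :=
  forall x t, A x t -> forall eps, 0 < eps -> exists d, 0 < d /\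
    forall y u, A y u -> Rabs (y - x) < d -> Rabs (u - t) < d ->
      Rabs (f y u - f x t) < eps.

Definition boundary_fn (T : R) (s : R -> R) : Prop :=
  cont_on (fun t => 0 <= t <= T) s /\
  (exists ds : R -> R,
     (forall t, 0 < t <= T -> deriv_within (fun u => 0 < u <= T) s t (ds t)) /\
     cont_on (fun t => 0 < t <= T) ds) /\
  s 0 = 0 /\
  (forall t, 0 < t <= T -> 0 < s t).

Definition Qdom (s : R -> R) (T : R) (x t : R) : Prop :=
  0 < x < s t /\ 0 < t < T.

Definition Qbar (s : R -> R) (T : R) (x t : R) : Prop :=
  0 <= t <= T /\ 0 <= x <= s t.

Definition Qbar' (s : R -> R) (T : R) (x t : R) : Prop :=
  Qbar s T x t /\ 0 < t.

(* U solves the Fixed Boundary Dirichlet Problem on s with data g, and Ux is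
   U_x on Q_{s,T}, continuously extended to the closure minus {t = 0}. *)
Definition FBDP_sol (T : R) (s g : R -> R) (U Ux : R -> R -> R) : Prop :=
  exists Uxx Ut : R -> R -> R,
    cont2_on (Qbar s T) U /\
    (forall x t, Qdom s T x t ->
       is_derive (fun y => U y t) x (Ux x t) /\
       is_derive (fun y => Ux y t) x (Uxx x t) /\
       is_derive (fun u => U x u) t (Ut x t)) /\
    cont2_on (Qdom s T) Ux /\ cont2_on (Qdom s T) Uxx /\ cont2_on (Qdom s T) Ut /\
    cont2_on (Qbar' s T) Ux /\
    (forall x t, Qdom s T x t -> Ut x t = Uxx x t) /\
    U 0 0 = 0 /\
    (forall t, 0 <= t <= T -> U (s t) t = 0) /\
    (forall t, 0 <= t <= T -> U 0 t = g t).

(* Rval s Ux t r : r = R(s)(t) = - int_0^t U_x(s(z),z) dz, the integral being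
   understood as an improper integral at z = 0 (value in extended reals). *)
Definition Rval (s : R -> R) (Ux : R -> R -> R) (t : R) (r : Rbar) : Prop :=
  (t = 0 /\ r = Finite 0) \/
  (0 < t /\ filterlim (fun e => - RInt (fun z => Ux (s z) z) e t)
                      (at_right 0) (Rbar_locally r)).

(* Main.v *)
Require Import Defs.
From Stdlib Require Import Reals Lra Psatz ClassicalEpsilon Classical.
From Coquelicot Require Import Coquelicot.
Open Scope R_scope.
Ltac rl := repeat match goal with |- _ /\ _ => split end; lra.

Definition ed_cont (f : R -> R) (x : R) : Prop :=
  forall eps, 0 < eps -> exists d, 0 < d /\
    forall u, Rabs (u - x) < d -> Rabs (f u - f x) < eps.

Lemma ed_cont_pt f x : ed_cont f x <-> continuity_pt f x.
Proof.
  unfold continuity_pt, continue_in, limit1_in, limit_in; simpl; unfold R_dist.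
  split.
  - intros H eps He. destruct (H eps He) as [d [Hd H1]].
    exists d; split; [exact Hd|]. intros y [_ Hy]. apply H1; exact Hy.
  - intros H eps He. destruct (H eps He) as [d [Hd H1]].
    exists d; split; [exact Hd|]. intros u Hu.
    destruct (Req_dec u x) as [->|Hne].
    + rewrite Rminus_diag, Rabs_R0; exact He.
    + apply H1. split; [split; [exact I| auto] | exact Hu].
Qed.

Lemma ed_cont_continuous f x : ed_cont f x <-> continuous f x.
Proof. rewrite ed_cont_pt. apply continuity_pt_filterlim. Qed.

Definition cl (c d x : R) := Rmin (Rmax x c) d.

Lemma cl_in c d x : c <= d -> c <= cl c d x <= d.
Proof. unfold cl, Rmin, Rmax; intros; repeat destruct Rle_dec; lra. Qed.

Lemma cl_id c d x : c <= x <= d -> cl c d x = x.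
Proof. unfold cl, Rmin, Rmax; intros; repeat destruct Rle_dec; lra. Qed.

Lemma cl_lip c d d' x y : c <= d -> c <= d' ->
  Rabs (cl c d x - cl c d' y) <= Rabs (x - y) + Rabs (d - d').
Proof.
  unfold cl, Rmin, Rmax; intros; repeat destruct Rle_dec;
  unfold Rabs; repeat destruct Rcase_abs; lra.
Qed.

Lemma cl_lip1 c d x y : c <= d -> Rabs (cl c d x - cl c d y) <= Rabs (x - y).
Proof. intros. pose proof (cl_lip c d d x y H H). rewrite Rminus_diag, Rabs_R0 in H0. lra. Qed.

Definition cont2 (F : R -> R -> R) : Prop :=
  forall x t eps, 0 < eps -> exists d, 0 < d /\
    forall y u, Rabs (y - x) < d -> Rabs (u - t) < d -> Rabs (F y u - F x t) < eps.

Lemma cont2_slice_x F t x : cont2 F -> ed_cont (fun y => F y t) x.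
Proof.
  intros H eps He. destruct (H x t eps He) as [d [Hd H1]].
  exists d; split; auto. intros u Hu. apply H1; auto. rewrite Rminus_diag, Rabs_R0; auto.
Qed.

Lemma cont2_slice_t F x t : cont2 F -> ed_cont (fun u => F x u) t.
Proof.
  intros H eps He. destruct (H x t eps He) as [d [Hd H1]].
  exists d; split; auto. intros u Hu. apply H1; auto. rewrite Rminus_diag, Rabs_R0; auto.
Qed.

Lemma cont2_plus F G : cont2 F -> cont2 G -> cont2 (fun x t => F x t + G x t).
Proof.
  intros HF HG x t eps He.
  destruct (HF x t (eps/2)) as [d1 [Hd1 H1]]; [lra|].
  destruct (HG x t (eps/2)) as [d2 [Hd2 H2]]; [lra|].
  exists (Rmin d1 d2); split; [apply Rmin_pos; auto|].
  intros y u Hy Hu.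
  assert (A1 := H1 y u (Rlt_le_trans _ _ _ Hy (Rmin_l _ _)) (Rlt_le_trans _ _ _ Hu (Rmin_l _ _))).
  assert (A2 := H2 y u (Rlt_le_trans _ _ _ Hy (Rmin_r _ _)) (Rlt_le_trans _ _ _ Hu (Rmin_r _ _))).
  replace (F y u + G y u - (F x t + G x t)) with ((F y u - F x t) + (G y u - G x t)) by ring.
  eapply Rle_lt_trans; [apply Rabs_triang|]. lra.
Qed.

Lemma cont2_opp F : cont2 F -> cont2 (fun x t => - F x t).
Proof.
  intros HF x t eps He. destruct (HF x t eps He) as [d [Hd H1]].
  exists d; split; auto. intros y u Hy Hu.
  replace (- F y u - - F x t) with (- (F y u - F x t)) by ring. rewrite Rabs_Ropp; auto.
Qed.

Lemma cont2_t (g : R -> R) : (forall t, ed_cont g t) -> cont2 (fun x t => g t).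
Proof.
  intros Hg x t eps He. destruct (Hg t eps He) as [d [Hd H1]].
  exists d; split; auto.
Qed.

Lemma cl_cont (f : R -> R) c d : c <= d ->
  (forall x, c <= x <= d -> cont_within (fun y => c <= y <= d) f x) ->
  forall x, ed_cont (fun y => f (cl c d y)) x.
Proof.
  intros Hcd Hf x eps He.
  destruct (Hf (cl c d x) (cl_in c d x Hcd) eps He) as [del [Hdel H1]].
  exists del; split; auto. intros u Hu.
  apply H1. apply cl_in; auto.
  eapply Rle_lt_trans; [apply cl_lip1; auto| exact Hu].
Qed.

Lemma exRInt_rel f a b : a <= b ->
  (forall x, a <= x <= b -> cont_within (fun y => a <= y <= b) f x) ->
  ex_RInt f a b.
Proof.
  intros Hab Hf.
  apply ex_RInt_ext with (f := fun y => f (cl a b y)).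
  - intros x Hx. rewrite Rmin_left, Rmax_right in Hx by lra. rewrite cl_id; auto; lra.
  - apply (@ex_RInt_continuous R_CompleteNormedModule). intros z _. apply ed_cont_continuous. apply cl_cont; auto.
Qed.

Lemma bound1 f a b : a <= b ->
  (forall x, a <= x <= b -> cont_within (fun y => a <= y <= b) f x) ->
  exists B, forall x, a <= x <= b -> Rabs (f x) <= B.
Proof.
  intros Hab Hf.
  assert (Hc : forall x, ed_cont (fun y => - Rabs (f (cl a b y))) x).
  { intros x eps He. destruct (cl_cont f a b Hab Hf x eps He) as [d [Hd H1]].
    exists d; split; auto. intros u Hu. specialize (H1 u Hu).
    pose proof (Rabs_triang_inv (f (cl a b u)) (f (cl a b x))).
    pose proof (Rabs_triang_inv (f (cl a b x)) (f (cl a b u))).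
    rewrite (Rabs_minus_sym (f (cl a b x))) in H0.
    apply Rabs_def1; lra. }
  destruct (continuity_ab_min (fun y => - Rabs (f (cl a b y))) a b Hab) as [m [Hm _]].
  { intros c _. apply ed_cont_pt. apply Hc. }
  exists (Rabs (f (cl a b m))). intros x Hx. specialize (Hm x Hx). simpl in Hm.
  rewrite (cl_id a b x Hx) in Hm. lra.
Qed.

Lemma UC F a b c d : cont2 F -> forall eps, 0 < eps -> exists del, 0 < del /\
  forall x t y u, a <= x <= b -> c <= t <= d -> Rabs (y - x) < del -> Rabs (u - t) < del ->
  Rabs (F y u - F x t) < eps.
Proof.
  intros HF eps He.
  assert (Hd : forall p q, {dl : posreal | forall y u, Rabs (y - p) < dl -> Rabs (u - q) < dl ->
     Rabs (F y u - F p q) < eps / 2}).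
  { intros p q. apply constructive_indefinite_description.
    destruct (HF p q (eps/2)) as [dl [Hdl H1]]; [lra|].
    exists (mkposreal dl Hdl). exact H1. }
  destruct (compactness_value_2d a b c d (fun p q => mkposreal (proj1_sig (Hd p q) / 2)
                  ltac:(pose proof (cond_pos (proj1_sig (Hd p q))); lra))) as [dd Hdd].
  exists dd; split; [apply cond_pos|].
  intros x t y u Hx Ht Hy Hu.
  specialize (Hdd x t Hx Ht).
  apply NNPP; intro Hc; apply Hdd; intro Hex; destruct Hex as [p [q [Hp [Hq [H1 [H2 H3]]]]]].
  apply Hc. simpl in H1, H2, H3.
  pose proof (proj2_sig (Hd p q)) as Hdl. simpl in Hdl.
  set (dl := proj1_sig (Hd p q)) in *.
  pose proof (cond_pos dl) as Hdl0.
  assert (A1 : Rabs (F x t - F p q) < eps / 2) by (apply Hdl; lra).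
  assert (A2 : Rabs (F y u - F p q) < eps / 2).
  { apply Hdl.
    - replace (y - p) with ((y - x) + (x - p)) by ring.
      eapply Rle_lt_trans; [apply Rabs_triang|]. lra.
    - replace (u - q) with ((u - t) + (t - q)) by ring.
      eapply Rle_lt_trans; [apply Rabs_triang|]. lra. }
  replace (F y u - F x t) with ((F y u - F p q) - (F x t - F p q)) by ring.
  eapply Rle_lt_trans; [apply Rabs_triang|]. rewrite Rabs_Ropp. lra.
Qed.

Lemma EV_min F a b c d : cont2 F -> a <= b -> c <= d ->
  exists x0 t0, a <= x0 <= b /\ c <= t0 <= d /\
    forall x t, a <= x <= b -> c <= t <= d -> F x0 t0 <= F x t.
Proof.
  intros HF Hab Hcd.
  assert (Hm : forall t, {x | a <= x <= b /\ forall y, a <= y <= b -> F x t <= F y t}).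
  { intros t. apply constructive_indefinite_description.
    destruct (continuity_ab_min (fun y => F y t) a b Hab) as [m [Hm1 Hm2]].
    { intros z _. apply ed_cont_pt. apply cont2_slice_x; auto. }
    exists m; split; auto. }
  set (m := fun t => proj1_sig (Hm t)).
  assert (Hm1 : forall t, a <= m t <= b) by (intro t; unfold m; destruct (Hm t); simpl; tauto).
  assert (Hm2 : forall t y, a <= y <= b -> F (m t) t <= F y t)
    by (intros t; unfold m; destruct (Hm t); simpl; tauto).
  assert (Hpsi : forall t, c <= t <= d -> ed_cont (fun u => F (m u) u) t).
  { intros t Ht eps He.
    destruct (UC F a b (c-1) (d+1) HF eps He) as [del [Hdel H1]].
    exists (Rmin del 1); split; [apply Rmin_pos; lra|].
    intros u Hu.
    assert (Hu1 : Rabs (u - t) < del) by (eapply Rlt_le_trans; [exact Hu| apply Rmin_l]).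
    assert (Hu2 : Rabs (u - t) < 1) by (eapply Rlt_le_trans; [exact Hu| apply Rmin_r]).
    assert (Hu3 : c - 1 <= u <= d + 1) by (apply Rabs_def2 in Hu2; lra).
    assert (B1 : Rabs (F (m t) u - F (m t) t) < eps).
    { apply H1; auto; try lra. rewrite Rminus_diag, Rabs_R0; lra. }
    assert (B2 : Rabs (F (m u) t - F (m u) u) < eps).
    { apply H1; auto. rewrite Rminus_diag, Rabs_R0; lra. rewrite Rabs_minus_sym; auto. }
    pose proof (Hm2 t (m u) (Hm1 u)). pose proof (Hm2 u (m t) (Hm1 t)).
    apply Rabs_def2 in B1. apply Rabs_def2 in B2. apply Rabs_def1; lra. }
  destruct (continuity_ab_min (fun u => F (m u) u) c d Hcd) as [t0 [Ht0 Ht0']].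
  { intros z Hz. apply ed_cont_pt. apply Hpsi; auto. }
  exists (m t0), t0. split; [auto|]. split; [auto|].
  intros x t Hx Ht. specialize (Ht0 t Ht). simpl in Ht0.
  pose proof (Hm2 t x Hx). lra.
Qed.

Lemma EV_bound F a b c d : cont2 F -> a <= b -> c <= d ->
  exists B, forall x t, a <= x <= b -> c <= t <= d -> Rabs (F x t) <= B.
Proof.
  intros HF Hab Hcd.
  destruct (EV_min F a b c d HF Hab Hcd) as [x0 [t0 [_ [_ H0]]]].
  destruct (EV_min (fun x t => - F x t) a b c d (cont2_opp F HF) Hab Hcd) as [x1 [t1 [_ [_ H1]]]].
  exists (Rmax (Rabs (F x0 t0)) (Rabs (F x1 t1))).
  intros x t Hx Ht. specialize (H0 x t Hx Ht). specialize (H1 x t Hx Ht).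
  pose proof (Rmax_l (Rabs (F x0 t0)) (Rabs (F x1 t1))).
  pose proof (Rmax_r (Rabs (F x0 t0)) (Rabs (F x1 t1))).
  pose proof (Rle_abs (F x1 t1)). pose proof (Rle_abs (- F x0 t0)). rewrite Rabs_Ropp in H4.
  apply Rabs_le; lra.
Qed.

Definition ext (f : R -> R -> R) (s : R -> R) (c d : R) : R -> R -> R :=
  fun x t => f (cl 0 (s (cl c d t)) x) (cl c d t).

Lemma ext_eq f s c d x t : c <= t <= d -> 0 <= x <= s t -> ext f s c d x t = f x t.
Proof. intros Ht Hx. unfold ext. rewrite (cl_id c d t Ht). rewrite cl_id; auto. Qed.

Lemma ext_cont (A : R -> R -> Prop) f s T c d :
  0 <= c -> c <= d -> d <= T ->
  cont_on (fun t => 0 <= t <= T) s -> (forall t, 0 <= t <= T -> 0 <= s t) ->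
  (forall x t, c <= t <= d -> 0 <= x <= s t -> A x t) -> cont2_on A f ->
  cont2 (ext f s c d).
Proof.
  intros Hc Hcd HdT Hs Hs0 HA Hf x t eps He.
  set (t' := cl c d t). set (x' := cl 0 (s t') x).
  assert (Ht' : c <= t' <= d) by (apply cl_in; auto).
  assert (Hx' : 0 <= x' <= s t') by (apply cl_in; apply Hs0; lra).
  destruct (Hf x' t' (HA _ _ Ht' Hx') eps He) as [d1 [Hd1 H1]].
  destruct (Hs t' ltac:(lra) (d1/2) ltac:(lra)) as [d2 [Hd2 H2]].
  exists (Rmin (d1/2) d2); split; [apply Rmin_pos; lra|].
  intros y u Hy Hu. unfold ext. fold t'. fold x'.
  set (u' := cl c d u).
  assert (Hu' : c <= u' <= d) by (apply cl_in; auto).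
  assert (Hu1 : Rabs (u' - t') <= Rabs (u - t)) by (apply cl_lip1; auto).
  assert (Hm1 := Rmin_l (d1/2) d2). assert (Hm2 := Rmin_r (d1/2) d2).
  assert (Hsu : Rabs (s u' - s t') < d1/2) by (apply H2; lra).
  apply H1.
  - apply HA; auto. apply cl_in. apply Hs0; lra.
  - unfold x'. eapply Rle_lt_trans; [apply cl_lip; apply Hs0; lra|]. lra.
  - lra.
Qed.

Lemma cont2_on_sub (A B : R -> R -> Prop) f : (forall x t, A x t -> B x t) ->
  cont2_on B f -> cont2_on A f.
Proof.
  intros HAB Hf x t Hx eps He. destruct (Hf x t (HAB _ _ Hx) eps He) as [d [Hd H1]].
  exists d; split; auto.
Qed.

Lemma cont2_on_minus A f g : cont2_on A f -> cont2_on A g -> cont2_on A (fun x t => f x t - g x t).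
Proof.
  intros Hf Hg x t Hx eps He.
  destruct (Hf x t Hx (eps/2)) as [d1 [Hd1 H1]]; [lra|].
  destruct (Hg x t Hx (eps/2)) as [d2 [Hd2 H2]]; [lra|].
  exists (Rmin d1 d2); split; [apply Rmin_pos; auto|].
  intros y u Hy Hyu Hu.
  assert (Hm1 := Rmin_l d1 d2). assert (Hm2 := Rmin_r d1 d2).
  assert (A1 := H1 y u Hy ltac:(lra) ltac:(lra)).
  assert (A2 := H2 y u Hy ltac:(lra) ltac:(lra)).
  replace (f y u - g y u - (f x t - g x t)) with ((f y u - f x t) - (g y u - g x t)) by ring.
  eapply Rle_lt_trans; [apply Rabs_triang|]. rewrite Rabs_Ropp. lra.
Qed.

Lemma slice_rel (A : R -> R -> Prop) f t a b : cont2_on A f ->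
  (forall y, a <= y <= b -> A y t) ->
  forall x, a <= x <= b -> cont_within (fun y => a <= y <= b) (fun y => f y t) x.
Proof.
  intros Hf HA x Hx eps He. destruct (Hf x t (HA x Hx) eps He) as [d [Hd H1]].
  exists d; split; auto. intros u Hu Hux. apply H1; auto. rewrite Rminus_diag, Rabs_R0; auto.
Qed.

Lemma curve_rel (A : R -> R -> Prop) f p c d : cont2_on A f ->
  (forall t, c <= t <= d -> cont_within (fun y => c <= y <= d) p t) ->
  (forall t, c <= t <= d -> A (p t) t) ->
  forall t, c <= t <= d -> cont_within (fun y => c <= y <= d) (fun z => f (p z) z) t.
Proof.
  intros Hf Hp HA t Ht eps He.
  destruct (Hf (p t) t (HA t Ht) eps He) as [d1 [Hd1 H1]].
  destruct (Hp t Ht d1 Hd1) as [d2 [Hd2 H2]].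
  exists (Rmin d1 d2); split; [apply Rmin_pos; auto|].
  intros u Hu Hut. assert (Hm1 := Rmin_l d1 d2). assert (Hm2 := Rmin_r d1 d2).
  apply H1; [auto | apply H2; auto; lra | lra].
Qed.

Lemma locally_R (P : R -> Prop) x d : 0 < d -> (forall y, Rabs (y - x) < d -> P y) -> locally x P.
Proof. intros Hd HP. exists (mkposreal d Hd). intros y Hy. apply HP. exact Hy. Qed.

Lemma rel_ed (A : R -> Prop) f t r : 0 < r -> (forall u, Rabs (u - t) < r -> A u) ->
  cont_within A f t -> ed_cont f t.
Proof.
  intros Hr HA Hf eps He. destruct (Hf eps He) as [d [Hd H1]].
  exists (Rmin d r); split; [apply Rmin_pos; auto|].
  intros u Hu. assert (Hm1 := Rmin_l d r). assert (Hm2 := Rmin_r d r).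
  apply H1; [apply HA|]; lra.
Qed.

Lemma is_derive_ed (f : R -> R) (x l : R) : is_derive f x l -> ed_cont f x.
Proof.
  intro H. apply ed_cont_continuous. exact (@ex_derive_continuous R_AbsRing R_NormedModule f x (ex_intro _ l H)).
Qed.

Lemma deriv_is_derive (A : R -> Prop) (f : R -> R) (t l r : R) : 0 < r -> (forall u, Rabs (u - t) < r -> A u) ->
  deriv_within A f t l -> is_derive f t l.
Proof.
  intros Hr HA Hd. apply is_derive_Reals. intros eps He.
  destruct (Hd (eps/2) ltac:(lra)) as [d [Hd0 H1]].
  assert (Hp : 0 < Rmin d r) by (apply Rmin_pos; auto).
  exists (mkposreal _ Hp). intros h Hh0 Hh. simpl in Hh.
  assert (Hm1 := Rmin_l d r). assert (Hm2 := Rmin_r d r).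
  assert (Hu : Rabs (t + h - t) < r) by (replace (t+h-t) with h by ring; lra).
  assert (Hu' : Rabs (t + h - t) < d) by (replace (t+h-t) with h by ring; lra).
  specialize (H1 (t+h) (HA _ Hu) Hu'). replace (t+h-t) with h in H1 by ring.
  replace ((f (t + h) - f t) / h - l) with ((f (t + h) - f t - l * h) / h) by (field; auto).
  unfold Rdiv. rewrite Rabs_mult, Rabs_inv.
  assert (0 < Rabs h) by (apply Rabs_pos_lt; auto).
  apply (Rmult_lt_reg_r (Rabs h)); auto. rewrite Rmult_assoc, Rinv_l by lra. nra.
Qed.

Lemma mvt_rel (f df : R -> R) (a b : R) : a < b ->
  (forall x, a <= x <= b -> cont_within (fun y => a <= y <= b) f x) ->
  (forall x, a < x < b -> is_derive f x (df x)) ->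
  exists c, a < c < b /\ f b - f a = df c * (b - a).
Proof.
  intros Hab Hf Hd.
  set (g := fun y => f (cl a b y)).
  assert (Hg : forall c, a < c < b -> derivable_pt_lim g c (df c)).
  { intros c Hc. apply is_derive_Reals. apply is_derive_ext_loc with (f := f); [|apply Hd; auto].
    apply locally_R with (d := Rmin (c - a) (b - c)); [apply Rmin_pos; lra|].
    intros y Hy. assert (Hm1 := Rmin_l (c-a) (b-c)). assert (Hm2 := Rmin_r (c-a) (b-c)).
    apply Rabs_def2 in Hy. unfold g. rewrite cl_id; auto; lra. }
  assert (pr1 : forall c, a < c < b -> derivable_pt g c).
  { intros c Hc. exists (df c). apply Hg; auto. }
  destruct (MVT g id a b (fun c P => exist _ (df c) (Hg c P)) (fun c _ => derivable_pt_id c) Hab)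
    as [c [P HP]].
  - intros c _. apply ed_cont_pt. apply cl_cont; auto; lra.
  - intros c _. apply derivable_continuous_pt. apply derivable_pt_id.
  - exists c; split; auto. simpl in HP. rewrite derive_pt_id in HP.
    unfold g, id in HP. rewrite !cl_id in HP by lra. lra.
Qed.

Lemma SD (f f1 : R -> R) (x0 l p q : R) : p < x0 < q ->
  (forall y, p < y < q -> f x0 <= f y) ->
  (forall y, p < y < q -> is_derive f y (f1 y)) ->
  is_derive f1 x0 l -> 0 <= l.
Proof.
  intros Hx Hmin Hd Hd1.
  assert (Hf0 : f1 x0 = 0).
  { assert (Hl : derivable_pt_lim f x0 (f1 x0)) by (apply is_derive_Reals; apply Hd; auto).
    pose proof (deriv_minimum f p q x0 (exist _ (f1 x0) Hl) ltac:(lra) ltac:(lra)) as HH.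
    simpl in HH. apply HH. intros y Hy1 Hy2. apply Hmin; lra. }
  destruct (Rle_lt_dec 0 l) as [Hl|Hl]; auto. exfalso.
  apply is_derive_Reals in Hd1.
  destruct (Hd1 (- l / 2) ltac:(lra)) as [del Hdel].
  set (h := Rmin (del/2) ((q - x0)/2)).
  assert (Hh1 : 0 < h) by (apply Rmin_pos; [pose proof (cond_pos del)|]; lra).
  assert (Hh2 : h < del) by (pose proof (cond_pos del); pose proof (Rmin_l (del/2) ((q - x0)/2)); unfold h in *; lra).
  assert (Hh3 : h < q - x0) by (pose proof (Rmin_r (del/2) ((q - x0)/2)); unfold h in *; lra).
  assert (Hneg : forall k, 0 < k <= h -> f1 (x0 + k) < 0).
  { intros k Hk. assert (Hk0 : k <> 0) by lra.
    assert (Hk1 : Rabs k < del) by (rewrite Rabs_right; lra).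
    specialize (Hdel k Hk0 Hk1). rewrite Hf0 in Hdel.
    rewrite Rminus_0_r in Hdel.
    apply Rabs_def2 in Hdel.
    assert (f1 (x0 + k) / k < 0) by lra.
    assert (f1 (x0 + k) = f1 (x0 + k) / k * k) by (field; lra).
    nra. }
  destruct (mvt_rel f f1 x0 (x0 + h)) as [c [Hc Hfc]]; [lra| | |].
  - intros x Hx' eps He.
    assert (Hcx : ed_cont f x) by (apply is_derive_ed with (l := f1 x); apply Hd; lra).
    destruct (Hcx eps He) as [d [Hd0 H1]]. exists d; split; auto.
  - intros x Hx'. apply Hd; lra.
  - pose proof (Hneg (c - x0) ltac:(lra)). replace (x0 + (c - x0)) with c in H by ring.
    pose proof (Hmin (x0 + h) ltac:(lra)). nra.
Qed.

Lemma TD (g : R -> R) (k t0 eps eta : R) : 0 < eta ->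
  is_derive g t0 k ->
  (forall u, t0 - eta < u < t0 -> g t0 + eps * t0 <= g u + eps * u) ->
  k <= - eps.
Proof.
  intros Heta Hd Hm. destruct (Rle_lt_dec k (-eps)) as [Hk|Hk]; auto. exfalso.
  apply is_derive_Reals in Hd.
  destruct (Hd ((k + eps)/2) ltac:(lra)) as [del Hdel].
  set (h := - Rmin (del/2) (eta/2)).
  assert (Hh1 : 0 < Rmin (del/2) (eta/2)) by (apply Rmin_pos; [pose proof (cond_pos del)|]; lra).
  pose proof (Rmin_l (del/2) (eta/2)). pose proof (Rmin_r (del/2) (eta/2)).
  pose proof (cond_pos del).
  assert (Hh0 : h <> 0) by (unfold h; lra).
  assert (Hh : Rabs h < del) by (unfold h; rewrite Rabs_left; lra).
  specialize (Hdel h Hh0 Hh). apply Rabs_def2 in Hdel.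
  specialize (Hm (t0 + h) ltac:(unfold h; lra)).
  set (Q := (g (t0 + h) - g t0) / h) in *.
  assert (HQ : Q * h = g (t0 + h) - g t0) by (unfold Q; field; auto).
  assert (h < 0) by (unfold h; lra).
  nra.
Qed.

Lemma s_nonneg T s : s 0 = 0 -> (forall t, 0 < t <= T -> 0 < s t) ->
  forall t, 0 <= t <= T -> 0 <= s t.
Proof.
  intros H0 Hp t Ht. destruct (Req_dec t 0) as [->|Hne]; [lra|].
  apply Rlt_le, Hp; lra.
Qed.

Lemma MP (T : R) (s : R -> R) (W Wx Wxx Wt : R -> R -> R) :
  0 < T ->
  cont_on (fun t => 0 <= t <= T) s -> s 0 = 0 -> (forall t, 0 < t <= T -> 0 < s t) ->
  cont2_on (Qbar s T) W ->
  (forall x t, Qdom s T x t -> is_derive (fun y => W y t) x (Wx x t) /\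
     is_derive (fun y => Wx y t) x (Wxx x t) /\ is_derive (fun u => W x u) t (Wt x t)) ->
  (forall x t, Qdom s T x t -> Wt x t = Wxx x t) ->
  (forall t, 0 <= t <= T -> 0 <= W 0 t) ->
  (forall t, 0 <= t <= T -> 0 <= W (s t) t) ->
  forall x t, Qbar s T x t -> 0 <= W x t.
Proof.
  intros HT Hs Hs00 Hspos HW Hder Hpde Hb0 Hbs.
  assert (Hs0 := s_nonneg T s Hs00 Hspos).
  assert (Step1 : forall x1 t1, 0 <= t1 < T -> 0 <= x1 <= s t1 -> 0 <= W x1 t1).
  { intros x1 t1 Ht1 Hx1.
    destruct (Rle_lt_dec 0 (W x1 t1)) as [ok|Hneg]; auto. exfalso.
    set (eps := - W x1 t1 / (2 * (t1 + 1))).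
    assert (Heps : 0 < eps) by (unfold eps; apply Rdiv_lt_0_compat; lra).
    assert (Heps2 : W x1 t1 + eps * t1 < 0).
    { assert (E : eps * (2 * (t1 + 1)) = - W x1 t1) by (unfold eps; field; lra). nra. }
    destruct (bound1 s 0 t1) as [M HM]; [lra| |].
    { intros x Hx eps' He'. destruct (Hs x ltac:(rl) eps' He') as [d [Hd H1]].
      exists d; split; auto. intros u Hu Hux. apply H1; auto. lra. }
    set (v := fun x t => ext W s 0 t1 x t + eps * cl 0 t1 t).
    assert (Hv : cont2 v).
    { apply cont2_plus.
      - apply (ext_cont (Qbar s T) W s T 0 t1); auto; try lra.
        intros x t Ht Hx. split; lra.
      - apply (cont2_t (fun t => eps * cl 0 t1 t)). intros t e He.
        exists (e / eps); split; [apply Rdiv_lt_0_compat; auto|].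
        intros u Hu. rewrite <- Rmult_minus_distr_l, Rabs_mult, (Rabs_right eps) by lra.
        pose proof (cl_lip1 0 t1 u t ltac:(rl)).
        apply Rle_lt_trans with (eps * Rabs (u - t)); [nra|].
        apply Rmult_lt_reg_r with (/ eps); [apply Rinv_0_lt_compat; auto|].
        replace (eps * Rabs (u - t) * / eps) with (Rabs (u - t)) by (field; lra).
        unfold Rdiv in Hu; lra. }
    assert (HM0 : 0 <= M) by (specialize (HM 0 ltac:(rl)); pose proof (Rabs_pos (s 0)); lra).
    destruct (EV_min v 0 M 0 t1 Hv HM0 ltac:(rl)) as [x0 [t0 [Hx0 [Ht0 Hmin]]]].
    assert (Hveq : forall x t, 0 <= t <= t1 -> 0 <= x <= s t -> v x t = W x t + eps * t).
    { intros x t Ht Hx. unfold v. rewrite ext_eq by auto. rewrite cl_id by auto. reflexivity. }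
    assert (HsM : forall t, 0 <= t <= t1 -> s t <= M).
    { intros t Ht. specialize (HM t Ht). pose proof (Rle_abs (s t)). lra. }
    set (xb := cl 0 (s t0) x0).
    assert (Hxb : 0 <= xb <= s t0) by (apply cl_in; apply Hs0; lra).
    assert (Hv0 : v x0 t0 = W xb t0 + eps * t0).
    { unfold v, ext. rewrite (cl_id 0 t1 t0 Ht0). reflexivity. }
    assert (Hv1 := Hmin x1 t1 ltac:(pose proof (HsM t1 ltac:(rl)); rl) ltac:(rl)).
    rewrite Hv0 in Hv1. rewrite (Hveq x1 t1) in Hv1 by rl.
    assert (HWxb : W xb t0 < 0) by nra.
    destruct (Req_dec t0 0) as [Ht00|Ht00].
    { subst t0. rewrite Hs00 in Hxb. assert (xb = 0) by lra. rewrite H in HWxb.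
      specialize (Hb0 0 ltac:(rl)). lra. }
    destruct (Req_dec xb 0) as [Hx00|Hx00].
    { rewrite Hx00 in HWxb. specialize (Hb0 t0 ltac:(rl)). lra. }
    destruct (Req_dec xb (s t0)) as [Hxs|Hxs].
    { rewrite Hxs in HWxb. specialize (Hbs t0 ltac:(rl)). lra. }
    assert (HQ : Qdom s T xb t0) by (split; lra).
    destruct (Hder xb t0 HQ) as [Hd1 [Hd2 Hd3]].
    assert (Hxx : 0 <= Wxx xb t0).
    { apply (SD (fun y => W y t0) (fun y => Wx y t0) xb (Wxx xb t0) 0 (s t0)); auto; try lra.
      - intros y Hy. assert (H1 := Hmin y t0 ltac:(pose proof (HsM t0 Ht0); rl) Ht0).
        rewrite Hv0, Hveq in H1 by (auto; lra). lra.
      - intros y Hy. apply Hder. split; lra. }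
    destruct (Hs t0 ltac:(rl) (s t0 - xb) ltac:(rl)) as [eta [Heta Heta1]].
    assert (Hut : Wt xb t0 <= - eps).
    { apply (TD (fun u => W xb u) (Wt xb t0) t0 eps (Rmin eta t0)); auto.
      - apply Rmin_pos; lra.
      - intros u Hu. pose proof (Rmin_l eta t0). pose proof (Rmin_r eta t0).
        assert (Hsu : xb < s u).
        { assert (Rabs (s u - s t0) < s t0 - xb) by (apply Heta1; [lra|
            rewrite Rabs_left; lra]).
          apply Rabs_def2 in H1. lra. }
        assert (H2 := Hmin xb u ltac:(pose proof (HsM t0 Ht0); rl) ltac:(rl)).
        rewrite Hv0, Hveq in H2 by rl. lra. }
    rewrite Hpde in Hut by auto. lra. }
  intros x t [Ht Hx].
  destruct (Rlt_le_dec t T) as [HtT|HtT]; [apply Step1; auto; lra|].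
  assert (t = T) by lra. subst t.
  destruct (Rle_lt_dec 0 (W x T)) as [ok|Hneg]; auto. exfalso.
  destruct (HW x T ltac:(split; lra) (- W x T) ltac:(rl)) as [d [Hd H1]].
  destruct (Hs T ltac:(rl) d Hd) as [d2 [Hd2 H2]].
  set (m := Rmin (Rmin d d2 / 2) (T/2)).
  assert (Hmm : 0 < Rmin d d2) by (apply Rmin_pos; lra).
  pose proof (Rmin_l (Rmin d d2 / 2) (T/2)). pose proof (Rmin_r (Rmin d d2 / 2) (T/2)).
  pose proof (Rmin_l d d2). pose proof (Rmin_r d d2).
  assert (Hmp : 0 < m) by (apply Rmin_pos; lra).
  set (u := T - m).
  assert (Hu : 0 < u < T) by (unfold u, m in *; lra).
  assert (Hsu : Rabs (s u - s T) < d) by (apply H2; [lra| unfold u; rewrite Rabs_left; unfold m in *; lra]).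
  set (y := Rmin x (s u)).
  assert (Hy : 0 <= y <= s u).
  { unfold y, Rmin. destruct Rle_dec; pose proof (Hs0 u ltac:(rl)); lra. }
  assert (Hyx : Rabs (y - x) < d).
  { apply Rabs_def2 in Hsu. unfold y, Rmin. destruct Rle_dec; apply Rabs_def1; lra. }
  assert (Hyu : Rabs (u - T) < d). 
  { unfold u; rewrite Rabs_left; unfold m in *; lra. }
  specialize (H1 y u ltac:(split; lra) Hyx Hyu).
  assert (HWy := Step1 y u ltac:(rl) Hy).
  apply Rabs_def2 in H1. lra.
Qed.

Lemma right_sign T s (U Ux : R -> R -> R) t : 0 < t < T -> 0 < s t ->
  cont2_on (Qbar s T) U ->
  (forall y, 0 < y < s t -> is_derive (fun z => U z t) y (Ux y t)) ->
  cont2_on (Qbar' s T) Ux -> U (s t) t = 0 ->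
  (forall y, 0 <= y <= s t -> 0 <= U y t) -> Ux (s t) t <= 0.
Proof.
  intros Ht Hst HU Hd HUx H0 Hpos.
  destruct (Rle_lt_dec (Ux (s t) t) 0) as [ok|Hk]; auto. exfalso.
  destruct (HUx (s t) t ltac:(split; [split|]; rl) (Ux (s t) t) Hk) as [d [Hd0 H1]].
  set (a := Rmax (s t - d/2) (s t / 2)).
  assert (Ha3 : s t - d/2 <= a) by (unfold a; apply Rmax_l).
  assert (Ha2 : s t / 2 <= a) by (unfold a; apply Rmax_r).
  assert (Ha : a < s t) by (unfold a, Rmax; destruct Rle_dec; lra).
  clearbody a.
  destruct (mvt_rel (fun y => U y t) (fun y => Ux y t) a (s t) Ha) as [c [Hc Hfc]].
  - apply (slice_rel (Qbar s T)); auto. intros y Hy. split; rl.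
  - intros x Hx. apply Hd. lra.
  - assert (Hcp : Rabs (Ux c t - Ux (s t) t) < Ux (s t) t).
    { apply H1; [split; [split|]; rl| |].
      - rewrite Rabs_left; [|lra]. lra.
      - rewrite Rminus_diag, Rabs_R0; lra. }
    apply Rabs_def2 in Hcp. pose proof (Hpos a ltac:(rl)). rewrite H0 in Hfc. nra.
Qed.

Lemma left_sign T s (W Wx : R -> R -> R) t : 0 < t < T -> 0 < s t ->
  cont2_on (Qbar s T) W ->
  (forall y, 0 < y < s t -> is_derive (fun z => W z t) y (Wx y t)) ->
  cont2_on (Qbar' s T) Wx -> W 0 t = 0 ->
  (forall y, 0 <= y <= s t -> 0 <= W y t) -> 0 <= Wx 0 t.
Proof.
  intros Ht Hst HU Hd HUx H0 Hpos.
  destruct (Rle_lt_dec 0 (Wx 0 t)) as [ok|Hk]; auto. exfalso.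
  destruct (HUx 0 t ltac:(split; [split|]; rl) (- Wx 0 t) ltac:(lra)) as [d [Hd0 H1]].
  set (a := Rmin (d/2) (s t / 2)).
  assert (Ha3 : a <= d/2) by (unfold a; apply Rmin_l).
  assert (Ha2 : a <= s t / 2) by (unfold a; apply Rmin_r).
  assert (Ha : 0 < a) by (unfold a; apply Rmin_pos; lra).
  clearbody a.
  destruct (mvt_rel (fun y => W y t) (fun y => Wx y t) 0 a Ha) as [c [Hc Hfc]].
  - apply (slice_rel (Qbar s T)); auto. intros y Hy. split; rl.
  - intros x Hx. apply Hd. lra.
  - assert (Hcp : Rabs (Wx c t - Wx 0 t) < - Wx 0 t).
    { apply H1; [split; [split|]; rl| |].
      - rewrite Rminus_0_r, Rabs_right; [|lra]. lra.
      - rewrite Rminus_diag, Rabs_R0; lra. }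
    apply Rabs_def2 in Hcp. pose proof (Hpos a ltac:(rl)). rewrite H0 in Hfc. nra.
Qed.

Definition Eset (f : R -> R) (t : R) := fun y => exists e, 0 < e < t /\ y = f e.

Lemma Lub_not_minf (f : R -> R) (t : R) : 0 < t -> Lub_Rbar (Eset f t) <> m_infty.
Proof.
  intros Ht Heq. destruct (Lub_Rbar_correct (Eset f t)) as [Hub _].
  rewrite Heq in Hub. specialize (Hub (f (t/2)) ltac:(exists (t/2); split; [lra|auto])).
  simpl in Hub. exact Hub.
Qed.

Lemma Lub_ub (f : R -> R) (t e : R) : 0 < e < t -> Rbar_le (f e) (Lub_Rbar (Eset f t)).
Proof.
  intros He. destruct (Lub_Rbar_correct (Eset f t)) as [Hub _]. apply Hub. exists e; auto.
Qed.

Lemma Lub_approx (f : R -> R) (t M : R) : Rbar_lt M (Lub_Rbar (Eset f t)) ->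
  exists e, 0 < e < t /\ M < f e.
Proof.
  intros HM. apply NNPP. intro Hn.
  destruct (Lub_Rbar_correct (Eset f t)) as [_ Hlub].
  assert (Hb : is_ub_Rbar (Eset f t) M).
  { intros y [e [He ->]]. simpl. apply Rnot_lt_le. intro Hlt. apply Hn. exists e; auto. }
  specialize (Hlub M Hb). apply (Rbar_lt_not_le _ _ HM Hlub).
Qed.

Lemma mono_lim (f : R -> R) t : 0 < t ->
  (forall e1 e2, 0 < e1 <= e2 -> e2 < t -> f e2 <= f e1) ->
  filterlim f (at_right 0) (Rbar_locally (Lub_Rbar (Eset f t))).
Proof.
  intros Ht Hmono P HP.
  assert (Hnm := Lub_not_minf f t Ht).
  destruct (Lub_Rbar (Eset f t)) as [l| |] eqn:HL.
  - destruct HP as [eps Heps].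
    destruct (Lub_approx f t (l - eps)) as [e0 [He0 Hf0]].
    { rewrite HL. simpl. pose proof (cond_pos eps). lra. }
    unfold filtermap. apply locally_R with (d := e0); [lra|].
    intros y Hy Hy0. apply Rabs_def2 in Hy. rewrite Rminus_0_r in Hy.
    apply Heps.
    assert (H1 := Lub_ub f t y ltac:(lra)). rewrite HL in H1. simpl in H1.
    assert (H2 := Hmono y e0 ltac:(lra) ltac:(lra)).
    change (Rabs (f y - l) < eps). apply Rabs_def1; lra.
  - destruct HP as [M HM].
    destruct (Lub_approx f t M) as [e0 [He0 Hf0]].
    { rewrite HL. simpl. auto. }
    unfold filtermap. apply locally_R with (d := e0); [lra|].
    intros y Hy Hy0. apply Rabs_def2 in Hy. rewrite Rminus_0_r in Hy.
    apply HM. assert (H2 := Hmono y e0 ltac:(lra) ltac:(lra)). lra.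
  - exfalso; auto.
Qed.

Lemma lub_compare (f1 f2 G : R -> R) t : 0 < t ->
  (forall e1 e2, 0 < e1 <= e2 -> e2 < t -> f2 e2 <= f2 e1) ->
  (forall e, 0 < e < t -> f2 e <= f1 e + G e) ->
  (forall e d, 0 < e < t -> 0 < d -> exists e', 0 < e' < e /\ G e' < d) ->
  Rbar_le (Lub_Rbar (Eset f2 t)) (Lub_Rbar (Eset f1 t)).
Proof.
  intros Ht Hmono Hle HG.
  destruct (Lub_Rbar_correct (Eset f2 t)) as [_ Hlub]. apply Hlub.
  intros y [e [He ->]].
  assert (Hnm := Lub_not_minf f1 t Ht).
  destruct (Lub_Rbar (Eset f1 t)) as [l| |] eqn:HL; simpl; auto.
  - apply Rnot_lt_le. intro Hlt.
    destruct (HG e (f2 e - l) He ltac:(lra)) as [e' [He' HGe']].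
    assert (H1 := Lub_ub f1 t e' ltac:(lra)). rewrite HL in H1. simpl in H1.
    assert (H2 := Hmono e' e ltac:(lra) ltac:(lra)).
    assert (H3 := Hle e' ltac:(lra)). lra.
Qed.

Lemma ed_plus (f g : R -> R) x : ed_cont f x -> ed_cont g x -> ed_cont (fun y => f y + g y) x.
Proof. rewrite !ed_cont_continuous. intros. apply (continuous_plus f g x); auto. Qed.
Lemma ed_minus (f g : R -> R) x : ed_cont f x -> ed_cont g x -> ed_cont (fun y => f y - g y) x.
Proof. rewrite !ed_cont_continuous. intros. apply (continuous_minus f g x); auto. Qed.
Lemma ed_mult (f g : R -> R) x : ed_cont f x -> ed_cont g x -> ed_cont (fun y => f y * g y) x.
Proof. rewrite !ed_cont_continuous. intros. apply (continuous_mult f g x); auto. Qed.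
Lemma ed_const (c : R) x : ed_cont (fun _ => c) x.
Proof. intros e He. exists 1; split; [lra|]. intros. rewrite Rminus_diag, Rabs_R0; auto. Qed.
Lemma ed_scal (c : R) (f : R -> R) x : ed_cont f x -> ed_cont (fun y => c * f y) x.
Proof. intros; apply ed_mult; auto; apply ed_const. Qed.

Lemma interior_curve (A : R -> R -> Prop) f p t r : 0 < r ->
  (forall y u, Rabs (y - p t) < r -> Rabs (u - t) < r -> A y u) ->
  cont2_on A f -> ed_cont p t -> ed_cont (fun u => f (p u) u) t.
Proof.
  intros Hr HA Hf Hp eps He.
  assert (HAt : A (p t) t) by (apply HA; rewrite Rminus_diag, Rabs_R0; auto).
  destruct (Hf (p t) t HAt eps He) as [d1 [Hd1 H1]].
  destruct (Hp (Rmin d1 r) ltac:(apply Rmin_pos; auto)) as [d2 [Hd2 H2]].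
  exists (Rmin d2 (Rmin d1 r)); split; [apply Rmin_pos; auto; apply Rmin_pos; auto|].
  intros u Hu. pose proof (Rmin_l d2 (Rmin d1 r)). pose proof (Rmin_r d2 (Rmin d1 r)).
  pose proof (Rmin_l d1 r). pose proof (Rmin_r d1 r).
  assert (Hpu := H2 u ltac:(lra)).
  apply H1; [apply HA| |]; lra.
Qed.

Lemma interior_slice (A : R -> R -> Prop) f x t r : 0 < r ->
  (forall y u, Rabs (y - x) < r -> Rabs (u - t) < r -> A y u) ->
  cont2_on A f -> ed_cont (fun y => f y t) x.
Proof.
  intros Hr HA Hf eps He.
  assert (HAt : A x t) by (apply HA; rewrite Rminus_diag, Rabs_R0; auto).
  destruct (Hf x t HAt eps He) as [d1 [Hd1 H1]].
  exists (Rmin d1 r); split; [apply Rmin_pos; auto|].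
  intros u Hu. pose proof (Rmin_l d1 r). pose proof (Rmin_r d1 r).
  assert (Z : Rabs (t - t) = 0) by (rewrite Rminus_diag, Rabs_R0; auto).
  apply H1; [apply HA| |]; lra.
Qed.

Lemma box T s tau al be : 0 < tau < T -> 0 < al -> al < be -> be < 1 ->
  cont_on (fun t => 0 <= t <= T) s -> 0 < s tau ->
  exists rho, 0 < rho /\ forall x y, al * s tau - rho <= x <= be * s tau + rho ->
    Rabs (y - tau) <= rho -> Qdom s T x y.
Proof.
  intros Ht Hal Halbe Hbe Hs Hst.
  destruct (Hs tau ltac:(lra) ((1 - be) * s tau / 2) ltac:(nra)) as [d [Hd H1]].
  set (rho := Rmin (Rmin (al * s tau / 2) ((1 - be) * s tau / 4)) (Rmin (Rmin (tau/2) ((T - tau)/2)) (d/2))).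
  assert (R1 : rho <= al * s tau / 2) by (unfold rho; repeat (eapply Rle_trans; [apply Rmin_l|]); lra).
  assert (R2 : rho <= (1 - be) * s tau / 4) by
      (unfold rho; eapply Rle_trans; [apply Rmin_l|]; apply Rmin_r).
  assert (R3 : rho <= tau / 2) by
      (unfold rho; eapply Rle_trans; [apply Rmin_r|]; eapply Rle_trans; [apply Rmin_l|]; apply Rmin_l).
  assert (R4 : rho <= (T - tau) / 2) by
      (unfold rho; eapply Rle_trans; [apply Rmin_r|]; eapply Rle_trans; [apply Rmin_l|]; apply Rmin_r).
  assert (R5 : rho <= d / 2) by (unfold rho; eapply Rle_trans; [apply Rmin_r|]; apply Rmin_r).
  assert (R0 : 0 < rho).
  { unfold rho. repeat apply Rmin_pos; nra. }
  clearbody rho.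
  exists rho; split; auto. intros x y Hx Hy. apply Rabs_le_between in Hy.
  assert (Hsy : Rabs (s y - s tau) < (1 - be) * s tau / 2).
  { apply H1; [rl|]. apply Rabs_def1; lra. }
  apply Rabs_def2 in Hsy.
  split; [split|split]; nra.
Qed.

Lemma Ga_deriv T s ds (U Ux Uxx Ut : R -> R -> R) tau a :
  0 < tau < T -> 0 < a < 1/2 ->
  cont_on (fun t => 0 <= t <= T) s -> 0 < s tau ->
  deriv_within (fun u => 0 < u <= T) s tau (ds tau) ->
  (forall x t, Qdom s T x t -> is_derive (fun y => U y t) x (Ux x t) /\
     is_derive (fun y => Ux y t) x (Uxx x t) /\ is_derive (fun u => U x u) t (Ut x t)) ->
  cont2_on (Qdom s T) Uxx -> cont2_on (Qdom s T) Ut ->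
  (forall x t, Qdom s T x t -> Ut x t = Uxx x t) ->
  is_derive (fun t => RInt (fun x => U x t) (a * s t) ((1 - a) * s t)) tau
   (Ux ((1-a) * s tau) tau - Ux (a * s tau) tau
    + U ((1-a) * s tau) tau * ((1-a) * ds tau) - U (a * s tau) tau * (a * ds tau)).
Proof.
  intros Ht Ha Hs Hst Hds Hder HUxx HUt Hpde.
  destruct (box T s tau a (1-a) Ht ltac:(lra) ltac:(lra) ltac:(lra) Hs Hst) as [rho [Hrho Hbox]].
  set (S := s tau) in *.
  assert (HaS : a * S < (1 - a) * S) by nra.
  assert (HaS0 : 0 < a * S) by nra.
  assert (Hsd : is_derive s tau (ds tau)).
  { apply (deriv_is_derive (fun u => 0 < u <= T) s tau (ds tau) (Rmin tau (T - tau))); auto.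
    - apply Rmin_pos; lra.
    - intros u Hu. pose proof (Rmin_l tau (T-tau)). pose proof (Rmin_r tau (T-tau)).
      apply Rabs_def2 in Hu. lra. }
  assert (HDer : forall x y, a * S - rho <= x <= (1 - a) * S + rho -> Rabs (y - tau) <= rho ->
     Derive (fun z => U x z) y = Ut x y).
  { intros x y Hx Hy. apply is_derive_unique. apply (Hder x y (Hbox x y Hx Hy)). }
  assert (HCD : forall x' t', Rabs (x' - tau) < rho / 2 -> a * S - rho/2 <= t' <= (1 - a) * S + rho/2 ->
     continuity_2d_pt (fun u v => Derive (fun z => U v z) u) x' t').
  { intros x' t' Hx' Ht' eps.
    assert (HQ : Qdom s T t' x') by (apply Hbox; lra).
    destruct (HUt t' x' HQ eps (cond_pos eps)) as [d [Hd H1]].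
    assert (Hp : 0 < Rmin d (rho/2)) by (apply Rmin_pos; lra).
    exists (mkposreal _ Hp). intros u v Hu Hv. simpl in Hu, Hv.
    pose proof (Rmin_l d (rho/2)). pose proof (Rmin_r d (rho/2)).
    apply Rabs_def2 in Hu. apply Rabs_def2 in Hv. apply Rabs_def2 in Hx'.
    rewrite (HDer v u) by (try apply Rabs_le; lra).
    rewrite (HDer t' x') by (try apply Rabs_le; lra).
    apply H1; [apply Hbox; try apply Rabs_le; lra| apply Rabs_def1; lra| apply Rabs_def1; lra]. }
  assert (HcU : forall x y, a * S - rho <= x <= (1 - a) * S + rho -> Rabs (y - tau) <= rho ->
     continuous (fun z => U z y) x).
  { intros x y Hx Hy. apply (@ex_derive_continuous R_AbsRing R_NormedModule).
    exists (Ux x y). apply (Hder x y (Hbox x y Hx Hy)). }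
  assert (HexU : forall y p q, Rabs (y - tau) <= rho ->
     a * S - rho <= p <= (1 - a) * S + rho -> a * S - rho <= q <= (1 - a) * S + rho ->
     ex_RInt (fun z => U z y) p q).
  { intros y p q Hy Hp Hq. apply (@ex_RInt_continuous R_CompleteNormedModule).
    intros z Hz. apply HcU; auto. split.
    - eapply Rle_trans; [|apply Hz]. apply Rmin_glb; lra.
    - eapply Rle_trans; [apply Hz|]. apply Rmax_lub; lra. }
  pose proof (is_derive_RInt_param_bound_comp (fun t x => U x t) (fun t => a * s t)
     (fun t => (1 - a) * s t) tau (a * ds tau) ((1 - a) * ds tau)) as HH.
  simpl in HH. fold S in HH.
  assert (Hrho2 : 0 < rho / 2) by lra.
  assert (HI : RInt (fun t => Derive (fun u => U t u) tau) (a * S) ((1 - a) * S)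
              = Ux ((1 - a) * S) tau - Ux (a * S) tau).
  { rewrite (RInt_ext _ (fun x => Uxx x tau)).
    2:{ intros x Hx. rewrite Rmin_left, Rmax_right in Hx by lra.
        rewrite HDer by (try rewrite Rminus_diag, Rabs_R0; lra).
        apply Hpde. apply Hbox; [lra|rewrite Rminus_diag, Rabs_R0; lra]. }
    apply is_RInt_unique.
    apply (@is_RInt_derive R_CompleteNormedModule (fun x => Ux x tau) (fun x => Uxx x tau)).
    - intros x Hx. rewrite Rmin_left, Rmax_right in Hx by lra.
      apply (Hder x tau). apply Hbox; [lra|rewrite Rminus_diag, Rabs_R0; lra].
    - intros x Hx. rewrite Rmin_left, Rmax_right in Hx by lra.
      apply ed_cont_continuous.
      apply (interior_slice (Qdom s T) Uxx x tau rho); auto.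
      intros y u Hy Hu. apply Hbox; [apply Rabs_def2 in Hy; lra| apply Rlt_le; auto]. }
  replace (Ux ((1 - a) * S) tau - Ux (a * S) tau +
     U ((1 - a) * S) tau * ((1 - a) * ds tau) - U (a * S) tau * (a * ds tau))
    with (RInt (fun t => Derive (fun u => U t u) tau) (a * S) ((1 - a) * S) +
       - U (a * S) tau * (a * ds tau) + U ((1 - a) * S) tau * ((1 - a) * ds tau))
    by (rewrite HI; ring).
  apply HH.
  - apply locally_R with (d := rho); auto. intros y Hy. apply HexU; lra.
  - exists (mkposreal _ Hrho2). apply locally_R with (d := rho); auto. intros y Hy.
    simpl. apply HexU; lra.
  - exists (mkposreal _ Hrho2). apply locally_R with (d := rho); auto. intros y Hy.
    simpl. apply HexU; lra.
  - apply is_derive_scal; auto.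
  - apply is_derive_scal; auto.
  - exists (mkposreal _ Hrho2). apply locally_R with (d := rho); auto. intros y Hy t Hty.
    simpl in Hty. rewrite Rmin_left, Rmax_right in Hty by lra.
    exists (Ut t y). apply (Hder t y). apply Hbox; [lra| apply Rlt_le; auto].
  - intros t Hty. rewrite Rmin_left, Rmax_right in Hty by lra.
    apply HCD; [rewrite Rminus_diag, Rabs_R0; lra| lra].
  - exists (mkposreal _ Hrho2). intros u v Hu Hv. simpl in Hu, Hv.
    apply HCD; auto. apply Rabs_def2 in Hv; lra.
  - exists (mkposreal _ Hrho2). intros u v Hu Hv. simpl in Hu, Hv.
    apply HCD; auto. apply Rabs_def2 in Hv; lra.
  - apply continuity_pt_filterlim. apply HcU; [lra| rewrite Rminus_diag, Rabs_R0; lra].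
  - apply continuity_pt_filterlim. apply HcU; [lra| rewrite Rminus_diag, Rabs_R0; lra].
Qed.

Definition Hyp T s ds (U Ux Uxx Ut : R -> R -> R) : Prop :=
  0 < T /\ cont_on (fun t => 0 <= t <= T) s /\ s 0 = 0 /\ (forall t, 0 < t <= T -> 0 < s t) /\
  (forall t, 0 < t <= T -> deriv_within (fun u => 0 < u <= T) s t (ds t)) /\
  cont_on (fun t => 0 < t <= T) ds /\
  cont2_on (Qbar s T) U /\
  (forall x t, Qdom s T x t -> is_derive (fun y => U y t) x (Ux x t) /\
     is_derive (fun y => Ux y t) x (Uxx x t) /\ is_derive (fun u => U x u) t (Ut x t)) /\
  cont2_on (Qdom s T) Ux /\ cont2_on (Qdom s T) Uxx /\ cont2_on (Qdom s T) Ut /\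
  cont2_on (Qbar' s T) Ux /\
  (forall x t, Qdom s T x t -> Ut x t = Uxx x t) /\
  (forall t, 0 <= t <= T -> U (s t) t = 0).

Definition Da s ds (U Ux : R -> R -> R) a t :=
  Ux ((1-a) * s t) t - Ux (a * s t) t
    + U ((1-a) * s t) t * ((1-a) * ds t) - U (a * s t) t * (a * ds t).

Definition Ga s (U : R -> R -> R) a t := RInt (fun x => U x t) (a * s t) ((1 - a) * s t).

Lemma s_ed T s t : 0 < t < T -> cont_on (fun t => 0 <= t <= T) s -> ed_cont s t.
Proof.
  intros Ht Hs. apply (rel_ed (fun t => 0 <= t <= T) s t (Rmin t (T - t))).
  - apply Rmin_pos; lra.
  - intros u Hu. pose proof (Rmin_l t (T-t)). pose proof (Rmin_r t (T-t)).
    apply Rabs_def2 in Hu. lra.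
  - apply Hs; lra.
Qed.

Lemma ds_ed T ds t : 0 < t < T -> cont_on (fun t => 0 < t <= T) ds -> ed_cont ds t.
Proof.
  intros Ht Hs. apply (rel_ed (fun t => 0 < t <= T) ds t (Rmin t (T - t))).
  - apply Rmin_pos; lra.
  - intros u Hu. pose proof (Rmin_l t (T-t)). pose proof (Rmin_r t (T-t)).
    apply Rabs_def2 in Hu. lra.
  - apply Hs; lra.
Qed.

Lemma Da_cont T s ds U Ux Uxx Ut a tau : Hyp T s ds U Ux Uxx Ut -> 0 < a < 1/2 -> 0 < tau < T ->
  ed_cont (Da s ds U Ux a) tau.
Proof.
  intros [HT [Hs [Hs0 [Hsp [Hds [Hdsc [HU [Hder [HUx1 [HUxx [HUt [HUx2 [Hpde Hbd]]]]]]]]]]]]] Ha Ht.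
  assert (Hst : 0 < s tau) by (apply Hsp; lra).
  destruct (box T s tau a (1-a) Ht ltac:(lra) ltac:(lra) ltac:(lra) Hs Hst) as [rho [Hrho Hbox]].
  assert (HU' : cont2_on (Qdom s T) U).
  { apply (cont2_on_sub _ (Qbar s T)); auto. intros x t [[? ?] [? ?]]. split; lra. }
  assert (Hsed := s_ed T s tau Ht Hs).
  assert (Hdsed := ds_ed T ds tau Ht Hdsc).
  assert (Hk : forall k f, cont2_on (Qdom s T) f -> k = a \/ k = 1 - a ->
    ed_cont (fun t => f (k * s t) t) tau).
  { intros k f Hf Hk. apply (interior_curve (Qdom s T) f (fun t => k * s t) tau rho); auto.
    - intros y u Hy Hu. apply Rabs_def2 in Hy.
      apply Hbox; [destruct Hk; subst k; split; nra | apply Rlt_le; auto].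
    - apply ed_scal; auto. }
  unfold Da. apply ed_minus; [apply ed_plus; [apply ed_minus|apply ed_mult]|apply ed_mult].
  all: try (apply Hk; auto; fail).
  all: apply ed_scal; auto.
Qed.

Lemma Ga_FTC T s ds U Ux Uxx Ut a t1 t2 : Hyp T s ds U Ux Uxx Ut -> 0 < a < 1/2 ->
  0 < t1 -> t1 <= t2 -> t2 < T ->
  RInt (Da s ds U Ux a) t1 t2 = Ga s U a t2 - Ga s U a t1.
Proof.
  intros H Ha Ht1 Ht12 Ht2.
  pose proof H as [HT [Hs [Hs0 [Hsp [Hds [Hdsc [HU [Hder [HUx1 [HUxx [HUt [HUx2 [Hpde Hbd]]]]]]]]]]]]].
  apply is_RInt_unique.
  apply (@is_RInt_derive R_CompleteNormedModule (Ga s U a) (Da s ds U Ux a)).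
  - intros x Hx. rewrite Rmin_left, Rmax_right in Hx by lra.
    unfold Ga, Da. apply (Ga_deriv T s ds U Ux Uxx Ut); auto; try lra.
    apply Hsp; lra. apply Hds; lra.
  - intros x Hx. rewrite Rmin_left, Rmax_right in Hx by lra.
    apply ed_cont_continuous. apply (Da_cont T s ds U Ux Uxx Ut); auto; lra.
Qed.

Definition Gf s (U : R -> R -> R) t := RInt (fun x => U x t) 0 (s t).

Lemma zero_lemma X K : 0 <= K -> (forall eps, 0 < eps -> Rabs X <= eps * K) -> X = 0.
Proof.
  intros HK H. destruct (Req_dec X 0) as [ok|Hne]; auto. exfalso.
  assert (HX : 0 < Rabs X) by (apply Rabs_pos_lt; auto).
  specialize (H (Rabs X / (2 * (K + 1))) ltac:(apply Rdiv_lt_0_compat; lra)).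
  assert (E : Rabs X / (2 * (K + 1)) * (2 * (K + 1)) = Rabs X) by (field; lra).
  nra.
Qed.

Lemma RInt_diff_bound (f g : R -> R) a b c : a <= b -> ex_RInt f a b -> ex_RInt g a b ->
  (forall t, a <= t <= b -> Rabs (f t - g t) <= c) ->
  Rabs (RInt f a b - RInt g a b) <= (b - a) * c.
Proof.
  intros Hab Hf Hg H.
  assert (E : RInt f a b - RInt g a b = RInt (fun t => f t - g t) a b).
  { symmetry. exact (RInt_minus f g a b Hf Hg). }
  rewrite E. apply abs_RInt_le_const; auto.
  apply (@ex_RInt_minus R_NormedModule f g a b Hf Hg).
Qed.

Lemma cw_minus (A : R -> Prop) (f g : R -> R) x : cont_within A f x -> cont_within A g x ->
  cont_within A (fun y => f y - g y) x.
Proof.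
  intros Hf Hg eps He.
  destruct (Hf (eps/2)) as [d1 [Hd1 H1]]; [lra|].
  destruct (Hg (eps/2)) as [d2 [Hd2 H2]]; [lra|].
  exists (Rmin d1 d2); split; [apply Rmin_pos; auto|].
  intros u Hu Hux. pose proof (Rmin_l d1 d2). pose proof (Rmin_r d1 d2).
  assert (A1 := H1 u Hu ltac:(lra)). assert (A2 := H2 u Hu ltac:(lra)).
  replace (f u - g u - (f x - g x)) with ((f u - f x) - (g u - g x)) by ring.
  eapply Rle_lt_trans; [apply Rabs_triang|]. rewrite Rabs_Ropp. lra.
Qed.

Lemma cw_restrict (A B : R -> Prop) f x : (forall y, A y -> B y) -> cont_within B f x -> cont_within A f x.
Proof.
  intros HAB Hf eps He. destruct (Hf eps He) as [d [Hd H1]]. exists d; split; auto.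
Qed.

Lemma tri4 p q r w : Rabs (p - q + r - w) <= Rabs p + Rabs q + Rabs r + Rabs w.
Proof. unfold Rabs; repeat destruct Rcase_abs; lra. Qed.

Lemma ID4 T s ds U Ux Uxx Ut t1 t2 : Hyp T s ds U Ux Uxx Ut -> 0 < t1 -> t1 < t2 -> t2 < T ->
  Gf s U t2 - Gf s U t1 = RInt (fun z => Ux (s z) z - Ux 0 z) t1 t2.
Proof.
  intros H Ht1 Ht12 Ht2.
  pose proof H as [HT [Hs [Hs0 [Hsp [Hds [Hdsc [HU [Hder [HUx1 [HUxx [HUt [HUx2 [Hpde Hbd]]]]]]]]]]]]].
  assert (Hsnn : forall t, 0 <= t <= T -> 0 <= s t).
  { intros t Ht. destruct (Req_dec t 0) as [->|]; [lra|]. apply Rlt_le, Hsp; lra. }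
  set (Ue := ext U s t1 t2). set (Uxe := ext Ux s t1 t2).
  assert (HUe : cont2 Ue).
  { apply (ext_cont (Qbar s T) U s T t1 t2); auto; try lra. intros x t Ht Hx; split; lra. }
  assert (HUxe : cont2 Uxe).
  { apply (ext_cont (Qbar' s T) Ux s T t1 t2); auto; try lra. intros x t Ht Hx; split; [split|]; lra. }
  assert (EUe : forall x t, t1 <= t <= t2 -> 0 <= x <= s t -> Ue x t = U x t).
  { intros; unfold Ue; apply ext_eq; auto. }
  assert (EUxe : forall x t, t1 <= t <= t2 -> 0 <= x <= s t -> Uxe x t = Ux x t).
  { intros; unfold Uxe; apply ext_eq; auto. }
  destruct (bound1 s t1 t2) as [M HM]; [lra| |].
  { intros x Hx. apply (cw_restrict _ (fun t => 0 <= t <= T)); [intros; lra|]. apply Hs; lra. }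
  destruct (bound1 ds t1 t2) as [S' HS']; [lra| |].
  { intros x Hx. apply (cw_restrict _ (fun t => 0 < t <= T)); [intros; lra|]. apply Hdsc; lra. }
  assert (HM0 : 0 <= M) by (specialize (HM t1 ltac:(lra)); pose proof (Rabs_pos (s t1)); lra).
  assert (HS'0 : 0 <= S') by (specialize (HS' t1 ltac:(lra)); pose proof (Rabs_pos (ds t1)); lra).
  destruct (EV_bound Ue 0 M t1 t2 HUe HM0 ltac:(lra)) as [B HB].
  assert (HB0 : 0 <= B) by (specialize (HB 0 t1 ltac:(lra) ltac:(lra)); pose proof (Rabs_pos (Ue 0 t1)); lra).
  assert (HsM : forall t, t1 <= t <= t2 -> 0 < s t <= M).
  { intros t Ht. split; [apply Hsp; lra|]. specialize (HM t Ht). pose proof (Rle_abs (s t)); lra. }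
  assert (HexD0 : ex_RInt (fun z => Ux (s z) z - Ux 0 z) t1 t2).
  { apply exRInt_rel; [lra|]. intros x Hx. apply cw_minus.
    - apply (curve_rel (Qbar' s T) Ux s t1 t2); auto.
      + intros t Ht. apply (cw_restrict _ (fun t => 0 <= t <= T)); [intros; lra|]. apply Hs; lra.
      + intros t Ht. pose proof (HsM t Ht). split; [split|]; lra.
    - apply (curve_rel (Qbar' s T) Ux (fun _ => 0) t1 t2); auto.
      + intros t Ht eps He. exists 1; split; [lra|]. intros. rewrite Rminus_diag, Rabs_R0; auto.
      + intros t Ht. pose proof (HsM t Ht). split; [split|]; lra. }
  set (X := Gf s U t2 - Gf s U t1 - RInt (fun z => Ux (s z) z - Ux 0 z) t1 t2).
  cut (X = 0); [unfold X; lra|].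
  apply (zero_lemma X (4 + (t2 - t1) * (3 + S'))); [nra|].
  intros eps Heps.
  destruct (UC Uxe 0 M t1 t2 HUxe eps Heps) as [e1 [He1 HU1]].
  destruct (UC Ue 0 M t1 t2 HUe eps Heps) as [e2 [He2 HU2]].
  set (P := (M + 1) * (B + 1) * (S' + 1)).
  assert (HP : 0 < P) by (unfold P; apply Rmult_lt_0_compat; [apply Rmult_lt_0_compat|]; lra).
  assert (Q1 : 1 <= (M + 1) * (B + 1)) by nra.
  assert (Q2 : 0 <= (B + 1) * (S' + 1)) by nra.
  assert (HP1 : M * B <= P).
  { unfold P. assert (0 <= (M + 1) * (B + 1) * S') by (apply Rmult_le_pos; lra). nra. }
  assert (HP2 : B * S' <= P).
  { unfold P. assert (0 <= M * ((B + 1) * (S' + 1))) by (apply Rmult_le_pos; lra). nra. }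
  assert (Hee : 0 < Rmin e1 e2) by (apply Rmin_pos; auto).
  set (a := Rmin (1/4) (Rmin (Rmin e1 e2 / (M + 1)) (eps / P))).
  assert (Ha1 : a <= 1/4) by (unfold a; apply Rmin_l).
  assert (Ha2 : a <= Rmin e1 e2 / (M + 1)) by (unfold a; eapply Rle_trans; [apply Rmin_r|]; apply Rmin_l).
  assert (Ha3 : a <= eps / P) by (unfold a; eapply Rle_trans; [apply Rmin_r|]; apply Rmin_r).
  assert (Ha0 : 0 < a).
  { unfold a. apply Rmin_pos; [lra|]. apply Rmin_pos; apply Rdiv_lt_0_compat; lra. }
  clearbody a.
  assert (HaM : a * M < Rmin e1 e2).
  { assert (a * (M + 1) <= Rmin e1 e2).
    { apply Rmult_le_reg_r with (/ (M + 1)); [apply Rinv_0_lt_compat; lra|].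
      rewrite Rmult_assoc, Rinv_r, Rmult_1_r by lra. exact Ha2. }
    lra. }
  pose proof (Rmin_l e1 e2). pose proof (Rmin_r e1 e2).
  assert (HaP : a * P <= eps).
  { apply Rmult_le_reg_r with (/ P); [apply Rinv_0_lt_compat; lra|].
    rewrite Rmult_assoc, Rinv_r, Rmult_1_r by lra. exact Ha3. }
  assert (HaMB : a * M * B <= eps) by nra.
  assert (HaBS : a * B * S' <= eps) by nra.
  assert (HD : forall t, t1 <= t <= t2 ->
     Rabs (Da s ds U Ux a t - (Ux (s t) t - Ux 0 t)) <= eps * (3 + S')).
  { intros t Ht. destruct (HsM t Ht) as [HS1 HS2].
    assert (A1 : Rabs (Ux ((1 - a) * s t) t - Ux (s t) t) < eps).
    { rewrite <- (EUxe ((1-a) * s t) t), <- (EUxe (s t) t) by (auto; split; nra).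
      apply HU1; auto; [split; lra| |]; [|rewrite Rminus_diag, Rabs_R0; lra].
      replace ((1 - a) * s t - s t) with (- (a * s t)) by ring.
      rewrite Rabs_Ropp, Rabs_right by nra. nra. }
    assert (A2 : Rabs (Ux (a * s t) t - Ux 0 t) < eps).
    { rewrite <- (EUxe (a * s t) t), <- (EUxe 0 t) by (auto; split; nra).
      apply HU1; auto; [split; lra| |]; [|rewrite Rminus_diag, Rabs_R0; lra].
      rewrite Rminus_0_r, Rabs_right by nra. nra. }
    assert (A3 : Rabs (U ((1 - a) * s t) t) < eps).
    { replace (U ((1 - a) * s t) t) with (U ((1 - a) * s t) t - U (s t) t) by (rewrite Hbd by lra; ring).
      rewrite <- (EUe ((1-a) * s t) t), <- (EUe (s t) t) by (auto; split; nra).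
      apply HU2; auto; [split; lra| |]; [|rewrite Rminus_diag, Rabs_R0; lra].
      replace ((1 - a) * s t - s t) with (- (a * s t)) by ring.
      rewrite Rabs_Ropp, Rabs_right by nra. nra. }
    assert (A4 : Rabs (U (a * s t) t) <= B).
    { rewrite <- (EUe (a * s t) t) by (auto; split; nra). apply HB; [split; nra|lra]. }
    assert (A5 : Rabs (ds t) <= S') by (apply HS'; lra).
    unfold Da.
    replace (Ux ((1 - a) * s t) t - Ux (a * s t) t + U ((1 - a) * s t) t * ((1 - a) * ds t) -
      U (a * s t) t * (a * ds t) - (Ux (s t) t - Ux 0 t)) with
      ((Ux ((1 - a) * s t) t - Ux (s t) t) - (Ux (a * s t) t - Ux 0 t) +
       U ((1 - a) * s t) t * ((1 - a) * ds t) - U (a * s t) t * (a * ds t)) by ring.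
    eapply Rle_trans; [apply tri4|].
    rewrite !Rabs_mult. rewrite (Rabs_right (1 - a)), (Rabs_right a) by lra.
    pose proof (Rabs_pos (U ((1 - a) * s t) t)). pose proof (Rabs_pos (U (a * s t) t)).
    pose proof (Rabs_pos (ds t)).
    assert (Y1 : 0 <= (1 - a) * Rabs (ds t) <= S') by (split; nra).
    assert (Rabs (U ((1 - a) * s t) t) * ((1 - a) * Rabs (ds t)) <= eps * S').
    { apply Rle_trans with (eps * ((1 - a) * Rabs (ds t))).
      - apply Rmult_le_compat_r; lra.
      - apply Rmult_le_compat_l; lra. }
    assert (Y2 : 0 <= a * Rabs (ds t) <= a * S') by (split; nra).
    assert (Rabs (U (a * s t) t) * (a * Rabs (ds t)) <= a * B * S').
    { apply Rle_trans with (B * (a * Rabs (ds t))).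
      - apply Rmult_le_compat_r; lra.
      - nra. }
    nra. }
  assert (HG : forall t, t1 <= t <= t2 -> Rabs (Gf s U t - Ga s U a t) <= 2 * eps).
  { intros t Ht. destruct (HsM t Ht) as [HS1 HS2].
    assert (Hex : forall p q, ex_RInt (fun x => Ue x t) p q).
    { intros p q. apply (@ex_RInt_continuous R_CompleteNormedModule).
      intros z _. apply ed_cont_continuous. apply cont2_slice_x; auto. }
    assert (E1 : Gf s U t = RInt (fun x => Ue x t) 0 (s t)).
    { unfold Gf. apply RInt_ext. intros x Hx. rewrite Rmin_left, Rmax_right in Hx by lra.
      rewrite EUe; auto; lra. }
    assert (E2 : Ga s U a t = RInt (fun x => Ue x t) (a * s t) ((1 - a) * s t)).
    { unfold Ga. apply RInt_ext. intros x Hx. rewrite Rmin_left, Rmax_right in Hx by nra.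
      rewrite EUe; auto; nra. }
    pose proof (RInt_Chasles (fun x => Ue x t) 0 (a * s t) (s t) (Hex _ _) (Hex _ _)) as C1.
    pose proof (RInt_Chasles (fun x => Ue x t) (a * s t) ((1 - a) * s t) (s t) (Hex _ _) (Hex _ _)) as C2.
    simpl in C1, C2.
    assert (B1 : Rabs (RInt (fun x => Ue x t) 0 (a * s t)) <= (a * s t - 0) * B).
    { apply abs_RInt_le_const; [nra|apply Hex|]. intros x Hx. apply HB; [split; nra|lra]. }
    assert (B2 : Rabs (RInt (fun x => Ue x t) ((1 - a) * s t) (s t)) <= (s t - (1 - a) * s t) * B).
    { apply abs_RInt_le_const; [nra|apply Hex|]. intros x Hx. apply HB; [split; nra|lra]. }
    rewrite E1, E2, <- C1, <- C2.
    replace (plus (RInt (fun x : R => Ue x t) 0 (a * s t))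
       (plus (RInt (fun x : R => Ue x t) (a * s t) ((1 - a) * s t))
          (RInt (fun x : R => Ue x t) ((1 - a) * s t) (s t))) -
     RInt (fun x : R => Ue x t) (a * s t) ((1 - a) * s t)) with
      (RInt (fun x : R => Ue x t) 0 (a * s t) + RInt (fun x : R => Ue x t) ((1 - a) * s t) (s t))
      by (unfold plus; simpl; ring).
    eapply Rle_trans; [apply Rabs_triang|].
    assert (a * s t * B <= eps) by nra. nra. }
  assert (HexDa : ex_RInt (Da s ds U Ux a) t1 t2).
  { apply (@ex_RInt_continuous R_CompleteNormedModule). intros z Hz.
    rewrite Rmin_left, Rmax_right in Hz by lra.
    apply ed_cont_continuous. apply (Da_cont T s ds U Ux Uxx Ut); auto; lra. }
  assert (HR := RInt_diff_bound (Da s ds U Ux a) (fun z => Ux (s z) z - Ux 0 z) t1 t2 (eps * (3 + S'))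
     ltac:(lra) HexDa HexD0 HD).
  rewrite (Ga_FTC T s ds U Ux Uxx Ut a t1 t2 H ltac:(lra) Ht1 ltac:(lra) Ht2) in HR.
  assert (HG1 := HG t1 ltac:(lra)). assert (HG2 := HG t2 ltac:(lra)).
  unfold X.
  replace (Gf s U t2 - Gf s U t1 - RInt (fun z : R => Ux (s z) z - Ux 0 z) t1 t2) with
   ((Gf s U t2 - Ga s U a t2) - (Gf s U t1 - Ga s U a t1) +
    (Ga s U a t2 - Ga s U a t1 - RInt (fun z : R => Ux (s z) z - Ux 0 z) t1 t2)) by ring.
  eapply Rle_trans; [apply Rabs_triang|].
  eapply Rle_trans; [apply Rplus_le_compat_r; apply Rabs_triang|]. rewrite Rabs_Ropp.
  nra.
Qed.

Lemma RInt_abs_any (f : R -> R) p q B : (forall x, Rabs (f x) <= B) ->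
  (forall p q, ex_RInt f p q) -> Rabs (RInt f p q) <= Rabs (q - p) * B.
Proof.
  intros HB Hex. destruct (Rle_dec p q) as [Hpq|Hpq].
  - rewrite (Rabs_right (q - p)) by lra. apply abs_RInt_le_const; [lra| apply Hex| intros; apply HB].
  - rewrite <- (opp_RInt_swap f q p (Hex q p)).
    change (Rabs (opp (RInt f q p))) with (Rabs (- RInt f q p)).
    rewrite Rabs_Ropp, (Rabs_left (q - p)) by lra.
    replace (- (q - p)) with (p - q) by ring. apply abs_RInt_le_const; [lra| apply Hex| intros; apply HB].
Qed.

Lemma ext_clamp f s c d x t : c <= t <= d -> 0 <= s t ->
  ext f s c d x t = ext f s c d (cl 0 (s t) x) t.
Proof.
  intros Ht Hs. unfold ext. rewrite (cl_id c d t Ht).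
  rewrite (cl_id 0 (s t) (cl 0 (s t) x)); auto. apply cl_in; auto.
Qed.

Lemma D0_cont T s ds U Ux Uxx Ut e t : Hyp T s ds U Ux Uxx Ut -> 0 < e -> e <= t -> t <= T ->
  forall x, e <= x <= t -> cont_within (fun y => e <= y <= t) (fun z => Ux (s z) z - Ux 0 z) x.
Proof.
  intros H He Het HtT.
  pose proof H as [HT [Hs [Hs0 [Hsp [Hds [Hdsc [HU [Hder [HUx1 [HUxx [HUt [HUx2 [Hpde Hbd]]]]]]]]]]]]].
  intros x Hx. apply cw_minus.
  - apply (curve_rel (Qbar' s T) Ux s e t); auto.
    + intros z Hz. apply (cw_restrict _ (fun t => 0 <= t <= T)); [intros; lra|]. apply Hs; lra.
    + intros z Hz. pose proof (Hsp z ltac:(lra)). split; [split|]; lra.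
  - apply (curve_rel (Qbar' s T) Ux (fun _ => 0) e t); auto.
    + intros z Hz eps Heps. exists 1; split; [lra|]. intros. rewrite Rminus_diag, Rabs_R0; auto.
    + intros z Hz. pose proof (Hsp z ltac:(lra)). split; [split|]; lra.
Qed.

Lemma ID T s ds U Ux Uxx Ut e t : Hyp T s ds U Ux Uxx Ut -> 0 < e -> e < t -> t <= T ->
  Gf s U t - Gf s U e = RInt (fun z => Ux (s z) z - Ux 0 z) e t.
Proof.
  intros H He Het HtT.
  destruct (Rlt_le_dec t T) as [HtT'|HtT']; [apply (ID4 T s ds U Ux Uxx Ut); auto|].
  assert (t = T) by lra. subst t. clear HtT HtT'.
  pose proof H as [HT [Hs [Hs0 [Hsp [Hds [Hdsc [HU [Hder [HUx1 [HUxx [HUt [HUx2 [Hpde Hbd]]]]]]]]]]]]].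
  set (Ue := ext U s e T).
  assert (HUe : cont2 Ue).
  { apply (ext_cont (Qbar s T) U s T e T); auto; try lra.
    - intros t Ht. destruct (Req_dec t 0) as [->|]; [lra|]. apply Rlt_le, Hsp; lra.
    - intros x t Ht Hx; split; lra. }
  assert (EUe : forall x t, e <= t <= T -> 0 <= x <= s t -> Ue x t = U x t).
  { intros; unfold Ue; apply ext_eq; auto. }
  destruct (bound1 s e T) as [M HM]; [lra| |].
  { intros x Hx. apply (cw_restrict _ (fun t => 0 <= t <= T)); [intros; lra|]. apply Hs; lra. }
  assert (HsM : forall t, e <= t <= T -> 0 < s t <= M).
  { intros t Ht. split; [apply Hsp; lra|]. specialize (HM t Ht). pose proof (Rle_abs (s t)); lra. }
  assert (HM0 : 0 <= M) by (destruct (HsM T ltac:(lra)); lra).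
  destruct (EV_bound Ue 0 M e T HUe HM0 ltac:(lra)) as [B HB].
  assert (HB0 : 0 <= B) by (specialize (HB 0 e ltac:(lra) ltac:(lra)); pose proof (Rabs_pos (Ue 0 e)); lra).
  assert (HBall : forall x t, e <= t <= T -> Rabs (Ue x t) <= B).
  { intros x t Ht. destruct (HsM t Ht). unfold Ue. rewrite (ext_clamp U s e T x t Ht) by lra. fold Ue.
    apply HB; auto. pose proof (cl_in 0 (s t) x ltac:(lra)). lra. }
  assert (HexD0 : forall p q, e <= p -> p <= q -> q <= T ->
    ex_RInt (fun z => Ux (s z) z - Ux 0 z) p q).
  { intros p q Hp Hpq Hq. apply exRInt_rel; auto. apply (D0_cont T s ds U Ux Uxx Ut); auto; lra. }
  destruct (bound1 (fun z => Ux (s z) z - Ux 0 z) e T) as [BD HBD]; [lra| |].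
  { apply (D0_cont T s ds U Ux Uxx Ut); auto; lra. }
  assert (HBD0 : 0 <= BD) by (specialize (HBD e ltac:(lra)); pose proof (Rabs_pos (Ux (s e) e - Ux 0 e)); lra).
  assert (HexU : forall t p q, ex_RInt (fun x => Ue x t) p q).
  { intros t p q. apply (@ex_RInt_continuous R_CompleteNormedModule).
    intros z _. apply ed_cont_continuous. apply cont2_slice_x; auto. }
  assert (EG : forall t, e <= t <= T -> Gf s U t = RInt (fun x => Ue x t) 0 (s t)).
  { intros t Ht. destruct (HsM t Ht). unfold Gf. apply RInt_ext. intros x Hx.
    rewrite Rmin_left, Rmax_right in Hx by lra. rewrite EUe; auto; lra. }
  set (X := Gf s U T - Gf s U e - RInt (fun z => Ux (s z) z - Ux 0 z) e T).
  cut (X = 0); [unfold X; lra|].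
  apply (zero_lemma X (M + B + BD)); [lra|].
  intros eps Heps.
  destruct (UC Ue 0 M e T HUe eps Heps) as [eta [Heta HU1]].
  destruct (Hs T ltac:(lra) eps Heps) as [ds' [Hds' Hs1]].
  set (m := Rmin (Rmin eta ds') (Rmin (T - e) eps) / 2).
  assert (Hm : 0 < m) by (unfold m; apply Rdiv_lt_0_compat; [repeat apply Rmin_pos; lra|lra]).
  assert (Hm1 : m < eta) by (unfold m; pose proof (Rmin_l (Rmin eta ds') (Rmin (T - e) eps));
     pose proof (Rmin_l eta ds'); lra).
  assert (Hm2 : m < ds') by (unfold m; pose proof (Rmin_l (Rmin eta ds') (Rmin (T - e) eps));
     pose proof (Rmin_r eta ds'); lra).
  assert (Hm3 : m < T - e) by (unfold m; pose proof (Rmin_r (Rmin eta ds') (Rmin (T - e) eps));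
     pose proof (Rmin_l (T - e) eps); lra).
  assert (Hm4 : m < eps) by (unfold m; pose proof (Rmin_r (Rmin eta ds') (Rmin (T - e) eps));
     pose proof (Rmin_r (T - e) eps); lra).
  clearbody m.
  set (t := T - m).
  assert (Ht : e < t < T) by (unfold t; lra).
  assert (I1 := ID4 T s ds U Ux Uxx Ut e t H He ltac:(lra) ltac:(lra)).
  assert (C := RInt_Chasles (fun z => Ux (s z) z - Ux 0 z) e t T
     (HexD0 e t ltac:(lra) ltac:(lra) ltac:(lra)) (HexD0 t T ltac:(lra) ltac:(lra) ltac:(lra))).
  simpl in C.
  assert (B1 : Rabs (RInt (fun z => Ux (s z) z - Ux 0 z) t T) <= (T - t) * BD).
  { apply abs_RInt_le_const; [lra| apply HexD0; lra|]. intros x Hx. apply HBD; lra. }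
  assert (Hst : Rabs (s t - s T) < eps) by (apply Hs1; [lra| unfold t; rewrite Rabs_left; lra]).
  destruct (HsM T ltac:(lra)) as [HsT1 HsT2].
  assert (B2 : Rabs (RInt (fun x => Ue x T) 0 (s T) - RInt (fun x => Ue x t) 0 (s T)) <= (s T - 0) * eps).
  { apply RInt_diff_bound; auto; [lra|]. intros x Hx.
    apply Rlt_le. rewrite Rabs_minus_sym. apply HU1; [lra|lra| rewrite Rminus_diag, Rabs_R0; lra|].
    unfold t. rewrite Rabs_left; lra. }
  assert (C2 := RInt_Chasles (fun x => Ue x t) 0 (s t) (s T) (HexU _ _ _) (HexU _ _ _)).
  simpl in C2.
  assert (B3 : Rabs (RInt (fun x => Ue x t) (s t) (s T)) <= Rabs (s T - s t) * B).
  { apply RInt_abs_any; auto. intros x. apply HBall; lra. }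
  rewrite Rabs_minus_sym in B3.
  unfold X. rewrite (EG T), (EG t) in * by lra.
  unfold plus in C, C2. simpl in C, C2.
  replace (RInt (fun x : R => Ue x T) 0 (s T) - Gf s U e - RInt (fun z : R => Ux (s z) z - Ux 0 z) e T)
    with ((RInt (fun x : R => Ue x T) 0 (s T) - RInt (fun x : R => Ue x t) 0 (s T))
          + RInt (fun x : R => Ue x t) (s t) (s T) - RInt (fun z : R => Ux (s z) z - Ux 0 z) t T)
    by (rewrite <- C, <- C2, <- I1; ring).
  unfold Rminus at 1.
  eapply Rle_trans; [apply Rabs_triang|]. rewrite Rabs_Ropp.
  eapply Rle_trans; [apply Rplus_le_compat_r; apply Rabs_triang|].
  assert (T - t < eps) by (unfold t; lra).
  assert (Rabs (s t - s T) * B <= eps * B) by (apply Rmult_le_compat_r; lra).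
  assert ((T - t) * BD <= eps * BD) by (apply Rmult_le_compat_r; lra).
  assert ((s T - 0) * eps <= M * eps) by (apply Rmult_le_compat_r; lra).
  nra.
Qed.

Lemma hyp_of T s g U Ux : 0 < T -> boundary_fn T s -> FBDP_sol T s g U Ux ->
  exists ds Uxx Ut, Hyp T s ds U Ux Uxx Ut /\ (forall t, 0 <= t <= T -> U 0 t = g t)
     /\ U 0 0 = 0.
Proof.
  intros HT [Hs [[ds [Hds Hdsc]] [Hs0 Hsp]]]
    [Uxx [Ut [HU [Hder [HUx1 [HUxx [HUt [HUx2 [Hpde [HU00 [Hbd Hg]]]]]]]]]]].
  exists ds, Uxx, Ut. split; [|split; auto].
  unfold Hyp. tauto.
Qed.

Lemma U_nonneg T s ds U Ux Uxx Ut : Hyp T s ds U Ux Uxx Ut ->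
  (forall t, 0 <= t <= T -> 0 <= U 0 t) -> forall x t, Qbar s T x t -> 0 <= U x t.
Proof.
  intros [HT [Hs [Hs0 [Hsp [Hds [Hdsc [HU [Hder [HUx1 [HUxx [HUt [HUx2 [Hpde Hbd]]]]]]]]]]]]] H0.
  apply (MP T s U Ux Uxx Ut); auto.
  intros t Ht. rewrite Hbd; auto; lra.
Qed.

Lemma h_ex T s ds U Ux Uxx Ut (p : R -> R) e t : Hyp T s ds U Ux Uxx Ut -> 0 < e -> e <= t -> t <= T ->
  (p = s \/ p = fun _ => 0) -> ex_RInt (fun z => Ux (p z) z) e t.
Proof.
  intros H He Het HtT Hp.
  pose proof H as [HT [Hs [Hs0 [Hsp [Hds [Hdsc [HU [Hder [HUx1 [HUxx [HUt [HUx2 [Hpde Hbd]]]]]]]]]]]]].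
  apply exRInt_rel; auto. apply (curve_rel (Qbar' s T) Ux p e t); auto.
  - intros z Hz. destruct Hp; subst p.
    + apply (cw_restrict _ (fun t => 0 <= t <= T)); [intros; lra|]. apply Hs; lra.
    + intros eps Heps. exists 1; split; [lra|]. intros. rewrite Rminus_diag, Rabs_R0; auto.
  - intros z Hz. pose proof (Hsp z ltac:(lra)). destruct Hp; subst p; split; [split| |split|]; lra.
Qed.

Lemma f_mono T s ds U Ux Uxx Ut t : Hyp T s ds U Ux Uxx Ut ->
  (forall x t, Qbar s T x t -> 0 <= U x t) -> 0 < t <= T ->
  forall e1 e2, 0 < e1 <= e2 -> e2 < t ->
   - RInt (fun z => Ux (s z) z) e2 t <= - RInt (fun z => Ux (s z) z) e1 t.
Proof.
  intros H Hpos Ht e1 e2 He He2.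
  pose proof H as [HT [Hs [Hs0 [Hsp [Hds [Hdsc [HU [Hder [HUx1 [HUxx [HUt [HUx2 [Hpde Hbd]]]]]]]]]]]]].
  assert (Hex1 := h_ex T s ds U Ux Uxx Ut s e1 e2 H ltac:(lra) ltac:(lra) ltac:(lra) (or_introl eq_refl)).
  assert (Hex2 := h_ex T s ds U Ux Uxx Ut s e2 t H ltac:(lra) ltac:(lra) ltac:(lra) (or_introl eq_refl)).
  assert (C := RInt_Chasles _ _ _ _ Hex1 Hex2). simpl in C. unfold plus in C; simpl in C.
  rewrite <- C.
  assert (Hneg : RInt (fun z => Ux (s z) z) e1 e2 <= 0).
  { assert (0 <= RInt (fun z => - Ux (s z) z) e1 e2).
    { apply RInt_ge_0; [lra| |].
      - apply (@ex_RInt_opp R_NormedModule (fun z => Ux (s z) z)); auto.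
      - intros z Hz. assert (Ux (s z) z <= 0); [|lra].
        apply (right_sign T s U Ux z); auto; try lra.
        + apply Hsp; lra.
        + intros y Hy. apply Hder. split; lra.
        + apply Hbd; lra.
        + intros y Hy. apply Hpos. split; lra. }
    assert (E : RInt (fun z => - Ux (s z) z) e1 e2 = - RInt (fun z => Ux (s z) z) e1 e2)
      by exact (RInt_opp (fun z => Ux (s z) z) e1 e2 Hex1).
    lra. }
  lra.
Qed.

Lemma f_ident T s ds U Ux Uxx Ut e t : Hyp T s ds U Ux Uxx Ut -> 0 < e -> e < t -> t <= T ->
  - RInt (fun z => Ux (s z) z) e t =
  - RInt (fun z => Ux 0 z) e t - Gf s U t + Gf s U e.
Proof.
  intros H He Het HtT.
  assert (I := ID T s ds U Ux Uxx Ut e t H He Het HtT).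
  assert (Hex1 := h_ex T s ds U Ux Uxx Ut s e t H ltac:(lra) ltac:(lra) ltac:(lra) (or_introl eq_refl)).
  assert (Hex2 := h_ex T s ds U Ux Uxx Ut (fun _ => 0) e t H ltac:(lra) ltac:(lra) ltac:(lra) (or_intror eq_refl)).
  assert (E : RInt (fun z => Ux (s z) z - Ux 0 z) e t =
     RInt (fun z => Ux (s z) z) e t - RInt (fun z => Ux 0 z) e t)
    by exact (RInt_minus (fun z => Ux (s z) z) (fun z => Ux 0 z) e t Hex1 Hex2).
  unfold Gf in *. lra.
Qed.

Theorem mainTheorem6 (T : R) (g : R -> R) :
  0 < T ->
  cont_on (fun t => 0 <= t <= T) g ->
  (forall t, 0 <= t <= T -> 0 <= g t) ->
  g 0 = 0 ->
  (forall s, boundary_fn T s -> exists U Ux, FBDP_sol T s g U Ux) ->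
  forall (s1 s2 : R -> R) (U1 Ux1 U2 Ux2 : R -> R -> R),
    boundary_fn T s1 -> boundary_fn T s2 ->
    FBDP_sol T s1 g U1 Ux1 -> FBDP_sol T s2 g U2 Ux2 ->
    (forall t, 0 <= t <= T -> s1 t <= s2 t) ->
    forall t, 0 <= t <= T ->
      exists r1 r2 : Rbar, Rval s1 Ux1 t r1 /\ Rval s2 Ux2 t r2 /\ Rbar_le r2 r1.
Proof.
  intros HT _ Hg0 _ _ s1 s2 U1 Ux1 U2 Ux2 Hb1 Hb2 Hsol1 Hsol2 Hle t Ht.
  destruct (Req_dec t 0) as [Ht0|Ht0].
  { exists (Finite 0), (Finite 0). split; [left; auto|]. split; [left; auto|]. simpl; lra. }
  assert (Htp : 0 < t <= T) by lra.
  destruct (hyp_of T s1 g U1 Ux1 HT Hb1 Hsol1) as [ds1 [Uxx1 [Ut1 [H1 [Hg1 _]]]]].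
  destruct (hyp_of T s2 g U2 Ux2 HT Hb2 Hsol2) as [ds2 [Uxx2 [Ut2 [H2 [Hg2 HU200]]]]].
  pose proof H1 as [_ [Hs1 [Hs10 [Hsp1 [_ [_ [HU1 [Hder1 [_ [_ [_ [HUx12 [Hpde1 Hbd1]]]]]]]]]]]]].
  pose proof H2 as [_ [Hs2 [Hs20 [Hsp2 [_ [_ [HU2 [Hder2 [_ [_ [_ [HUx22 [Hpde2 Hbd2]]]]]]]]]]]]].
  assert (Hsnn1 := s_nonneg T s1 Hs10 Hsp1).
  assert (Hsnn2 := s_nonneg T s2 Hs20 Hsp2).
  assert (Hpos1 : forall x t, Qbar s1 T x t -> 0 <= U1 x t).
  { apply (U_nonneg T s1 ds1 U1 Ux1 Uxx1 Ut1 H1). intros; rewrite Hg1; auto. }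
  assert (Hpos2 : forall x t, Qbar s2 T x t -> 0 <= U2 x t).
  { apply (U_nonneg T s2 ds2 U2 Ux2 Uxx2 Ut2 H2). intros; rewrite Hg2; auto. }
  assert (Hsub : forall x t, Qbar s1 T x t -> Qbar s2 T x t).
  { intros x t0 [Ht1 Hx1]. split; auto. pose proof (Hle t0 Ht1). lra. }
  assert (Hsubd : forall x t, Qdom s1 T x t -> Qdom s2 T x t).
  { intros x t0 [Hx1 Ht1]. split; auto. pose proof (Hle t0 ltac:(lra)). lra. }
  assert (Hsub' : forall x t, Qbar' s1 T x t -> Qbar' s2 T x t).
  { intros x t0 [Hq Ht1]. split; auto. }
  assert (HW : forall x t, Qbar s1 T x t -> U1 x t <= U2 x t).
  { intros x t0 Hq.
    assert (0 <= U2 x t0 - U1 x t0); [|lra].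
    apply (MP T s1 (fun x t => U2 x t - U1 x t) (fun x t => Ux2 x t - Ux1 x t)
      (fun x t => Uxx2 x t - Uxx1 x t) (fun x t => Ut2 x t - Ut1 x t)); auto.
    - apply cont2_on_minus; auto. apply (cont2_on_sub _ (Qbar s2 T)); auto.
    - intros y u Hq'. destruct (Hder1 y u Hq') as [D1 [D2 D3]].
      destruct (Hder2 y u (Hsubd _ _ Hq')) as [E1 [E2 E3]].
      split; [|split].
      + apply (is_derive_minus (fun y => U2 y u) (fun y => U1 y u)); auto.
      + apply (is_derive_minus (fun y => Ux2 y u) (fun y => Ux1 y u)); auto.
      + apply (is_derive_minus (fun u => U2 y u) (fun u => U1 y u)); auto.
    - intros y u Hq'. simpl. rewrite Hpde1, Hpde2; auto.
    - intros u Hu. simpl. rewrite Hg1, Hg2 by auto. lra.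
    - intros u Hu. simpl. rewrite Hbd1 by auto. rewrite Rminus_0_r. apply Hpos2.
      pose proof (Hle u Hu). pose proof (Hsnn1 u Hu). split; lra. }
  assert (Hflux0 : forall z, 0 < z < T -> Ux1 0 z <= Ux2 0 z).
  { intros z Hz.
    assert (0 <= Ux2 0 z - Ux1 0 z); [|lra].
    apply (left_sign T s1 (fun x t => U2 x t - U1 x t) (fun x t => Ux2 x t - Ux1 x t) z); auto.
    - apply Hsp1; lra.
    - apply cont2_on_minus; auto. apply (cont2_on_sub _ (Qbar s2 T)); auto.
    - intros y Hy. assert (Hq : Qdom s1 T y z) by (split; lra).
      destruct (Hder1 y z Hq) as [D1 _]. destruct (Hder2 y z (Hsubd _ _ Hq)) as [E1 _].
      apply (is_derive_minus (fun y => U2 y z) (fun y => U1 y z)); auto.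
    - apply cont2_on_minus; auto. apply (cont2_on_sub _ (Qbar' s2 T)); auto.
    - simpl. rewrite Hg1, Hg2 by lra. ring.
    - intros y Hy. assert (Hq : Qbar s1 T y z) by (split; lra). pose proof (HW y z Hq). lra. }
  assert (HexU : forall s U tau a b, cont2_on (Qbar s T) U -> 0 <= tau <= T -> 0 <= a -> a <= b -> b <= s tau ->
     ex_RInt (fun x => U x tau) a b).
  { intros s U tau a b HUc Htau Ha Hab Hb. apply exRInt_rel; auto.
    apply (slice_rel (Qbar s T)); auto. intros y Hy. split; lra. }
  assert (HG12 : forall tau, 0 < tau <= T -> Gf s1 U1 tau <= Gf s2 U2 tau).
  { intros tau Htau. unfold Gf.
    pose proof (Hle tau ltac:(lra)). pose proof (Hsnn1 tau ltac:(lra)).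
    assert (Ex1 := HexU s2 U2 tau 0 (s1 tau) HU2 ltac:(lra) ltac:(lra) ltac:(lra) ltac:(lra)).
    assert (Ex2 := HexU s2 U2 tau (s1 tau) (s2 tau) HU2 ltac:(lra) ltac:(lra) ltac:(lra) ltac:(lra)).
    assert (Ex3 := HexU s1 U1 tau 0 (s1 tau) HU1 ltac:(lra) ltac:(lra) ltac:(lra) ltac:(lra)).
    assert (C := RInt_Chasles _ _ _ _ Ex1 Ex2). unfold plus in C; simpl in C. rewrite <- C.
    assert (P1 : RInt (fun x => U1 x tau) 0 (s1 tau) <= RInt (fun x => U2 x tau) 0 (s1 tau)).
    { apply RInt_le; auto. intros x Hx. apply HW. split; lra. }
    assert (P2 : 0 <= RInt (fun x => U2 x tau) (s1 tau) (s2 tau)).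
    { apply RInt_ge_0; auto. intros x Hx. apply Hpos2. split; lra. }
    lra. }
  assert (HG1 : forall tau, 0 < tau <= T -> 0 <= Gf s1 U1 tau).
  { intros tau Htau. unfold Gf. pose proof (Hsnn1 tau ltac:(lra)).
    apply RInt_ge_0; auto. apply (HexU s1 U1 tau 0 (s1 tau) HU1); lra.
    intros x Hx. apply Hpos1. split; lra. }
  assert (HG2 : forall e d, 0 < e < t -> 0 < d -> exists e', 0 < e' < e /\ Gf s2 U2 e' < d).
  { intros e d He Hd.
    destruct (HU2 0 0 ltac:(split; lra) (d/2) ltac:(lra)) as [d1 [Hd1 Hc1]].
    destruct (Hs2 0 ltac:(lra) (Rmin d1 1) ltac:(apply Rmin_pos; lra)) as [d2 [Hd2 Hc2]].
    pose proof (Rmin_l d1 1). pose proof (Rmin_r d1 1).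
    set (e' := Rmin (Rmin e d1) d2 / 2).
    assert (He'0 : 0 < e') by (unfold e'; apply Rdiv_lt_0_compat; [repeat apply Rmin_pos|]; lra).
    assert (He'1 : e' < e) by (unfold e'; pose proof (Rmin_l (Rmin e d1) d2); pose proof (Rmin_l e d1); lra).
    assert (He'2 : e' < d1) by (unfold e'; pose proof (Rmin_l (Rmin e d1) d2); pose proof (Rmin_r e d1); lra).
    assert (He'3 : e' < d2) by (unfold e'; pose proof (Rmin_r (Rmin e d1) d2); lra).
    clearbody e'.
    exists e'. split; [lra|].
    assert (Hse : Rabs (s2 e' - s2 0) < Rmin d1 1) by (apply Hc2; [lra| rewrite Rminus_0_r, Rabs_right; lra]).
    rewrite Hs20, Rminus_0_r in Hse. pose proof (Hsnn2 e' ltac:(lra)).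
    rewrite Rabs_right in Hse by lra.
    unfold Gf.
    assert (B := abs_RInt_le_const (fun x => U2 x e') 0 (s2 e') (d/2) ltac:(lra)
       (HexU s2 U2 e' 0 (s2 e') HU2 ltac:(lra) ltac:(lra) ltac:(lra) ltac:(lra))).
    assert (B' : Rabs (RInt (fun x => U2 x e') 0 (s2 e')) <= (s2 e' - 0) * (d / 2)).
    { apply B. intros x Hx.
      assert (Z : U2 0 0 = 0) by exact HU200.
      assert (Hc := Hc1 x e' ltac:(split; lra) ltac:(rewrite Rminus_0_r, Rabs_right; lra)
         ltac:(rewrite Rminus_0_r, Rabs_right; lra)).
      rewrite Z, Rminus_0_r in Hc. lra. }
    pose proof (Rle_abs (RInt (fun x => U2 x e') 0 (s2 e'))).
    assert ((s2 e' - 0) * (d / 2) <= 1 * (d/2)) by (apply Rmult_le_compat_r; lra).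
    lra. }
  set (f1 := fun e => - RInt (fun z => Ux1 (s1 z) z) e t).
  set (f2 := fun e => - RInt (fun z => Ux2 (s2 z) z) e t).
  exists (Lub_Rbar (Eset f1 t)), (Lub_Rbar (Eset f2 t)).
  split; [|split].
  - right. split; [lra|]. apply mono_lim; [lra|].
    intros e1 e2 He He2. apply (f_mono T s1 ds1 U1 Ux1 Uxx1 Ut1 t); auto.
  - right. split; [lra|]. apply mono_lim; [lra|].
    intros e1 e2 He He2. apply (f_mono T s2 ds2 U2 Ux2 Uxx2 Ut2 t); auto.
  - apply (lub_compare f1 f2 (Gf s2 U2) t); [lra| | |exact HG2].
    + intros e1 e2 He He2. apply (f_mono T s2 ds2 U2 Ux2 Uxx2 Ut2 t); auto.
    + intros e He. unfold f1, f2.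
      rewrite (f_ident T s1 ds1 U1 Ux1 Uxx1 Ut1 e t H1), (f_ident T s2 ds2 U2 Ux2 Uxx2 Ut2 e t H2) by lra.
      assert (RInt (fun z => Ux1 0 z) e t <= RInt (fun z => Ux2 0 z) e t).
      { apply RInt_le; [lra| apply (h_ex T s1 ds1 U1 Ux1 Uxx1 Ut1); auto; lra |
          apply (h_ex T s2 ds2 U2 Ux2 Uxx2 Ut2); auto; lra|].
        intros x Hx. apply Hflux0. lra. }
      pose proof (HG12 t Htp). pose proof (HG1 e ltac:(lra)). lra.
Qed.
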